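(* Let $u_0\in H^s(\mathbb R)$ with $s$ large enough that the quantities below are finite, $T>0$, $c>0$, $\Delta t,\Delta x>0$, $\theta\in[0,\frac12)$ with $\Delta t(1-2\theta)\le\frac{\Delta x^3}{4}$. For every $n\in\{0,\dots,N-1\}$ and every $\gamma\in[0,\frac12)$, $$\begin{aligned}\|\mathcal A_\theta e^{n+1}\|^2_{\ell^2_\Delta}\le{}&\|\mathcal A_\theta e^n\|^2_{\ell^2_\Delta}[1+E_a\Delta t]+\Delta t\|\epsilon^n\|^2_{\ell^2_\Delta}\Big\{1+4\frac{\Delta t}{\Delta x}+\Delta t\Big\}+\Delta t\langle C_b,[D_+(e)^n]^2\rangle\\&+\Delta t^2C_c\|D(e)^n\|^2_{\ell^2_\Delta}+\Delta tC_d\|D_+D_-(e)^n\|^2_{\ell^2_\Delta}+\Delta tC_e\|D_+D(e)^n\|^2_{\ell^2_\Delta},\end{aligned}$$ where, with $U=\|[u_\Delta]^n\|_{\ell^\infty}$, $U_\pm=\|D_\pm([u_\Delta])^n\|_{\ell^\infty}$, $E=\|e^n\|_{\ell^\infty}$, $X=\Delta x^{\frac12-\gamma}+E+9E^2\Delta x^{\gamma-\frac12}$, $\mathbf 1=(1,1,\dots)$: $$E_a=U^2\Big(1+\frac{\Delta t}{\Delta x}\Big)+U_+\Big(7+\frac{\Delta t}{\Delta x}\Big[2c+\frac23E+\frac32U\Big]\Big)+U_+^2\Big[\sqrt2\frac{\sqrt{\Delta t}}{\sqrt{\Delta x}}+\frac{\Delta t^2}{\Delta x^2}\Big]+1+2c^2\frac{\Delta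 t}{\Delta x},$$ $$C_b=\Big(\frac{\Delta x}{6}D_+(e)^n-c\mathbf 1\Big)(\Delta x-c\Delta t)+(1-\theta)\Delta tU_+\mathbf 1,\qquad C_c=U^2+\Big\{E^2[1+\Delta x]+2EU+\frac{2c}{3}E\Big\}-c^2,$$ $$C_d=\frac{4}{\Delta x^2}\Big\{\Delta t\Big[(1-2\theta)+\frac{(1-\theta)\Delta x^2}{2}\Big[c+\frac X2\Big]+\Delta t(1-\theta)U_++\frac{(1-\theta)\Delta x^2}{4}\Big\{U_++\frac{\Delta x}{2}U_-\Big\}\Big]-\frac{\Delta x^3}{4}\Big\},$$ $$C_e=2(1-\theta)\Delta t\Big\{U+E+\frac X2\Big\}-\frac{4\Delta t}{\Delta x^2}\Big\{(1-2\theta)+\frac{(1-\theta)\Delta x^2}{2}\Big[c+\frac X2\Big]+\Delta t(1-\theta)U_+\Big\}.$$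
   Context: KdV equation $\partial_t u+\partial_x(u^2/2)+\partial_x^3u=0$ with datum $u_0$ and exact solution $u$. $t^n=n\Delta t$, $x_j=j\Delta x$, $N=\lfloor T/\Delta t\rfloor$. For sequences: $D_+(a)_j=(a_{j+1}-a_j)/\Delta x$, $D_-(a)_j=(a_j-a_{j-1})/\Delta x$, $D=\frac12(D_++D_-)$; products and powers componentwise; $\langle a,b\rangle=\Delta x\sum_ja_jb_j$, $\|a\|_{\ell^2_\Delta}=\langle a,a\rangle^{1/2}$, $\|a\|_{\ell^\infty}=\sup_j|a_j|$. $\mathcal A_\theta=I+\theta\Delta tD_+D_+D_-$. Scheme with parameters $c,\theta$: $\frac{v^{n+1}_j-v^n_j}{\Delta t}+D(\frac{v^2}{2})^n_j+\theta D_+D_+D_-(v)^{n+1}_j+(1-\theta)D_+D_+D_-(v)^n_j=\frac{c\Delta x}{2}D_+D_-(v)^n_j$, with $v^0_j=\frac1{\Delta x}\int_{x_j}^{x_{j+1}}u_0$. Averaged exact solution $[u_\Delta]^0_j=\frac1{\Delta x}\int_{x_j}^{x_{j+1}}u_0$, $[u_\Delta]^n_j=\frac{1}{\Delta x(\min(t^{n+1},T)-t^n)}\int_{t^n}^{\min(t^{n+1},T)}\int_{x_j}^{x_{j+1}}u\,dy\,ds$ for $n\ge1$. Error $e^n_j=v^n_j-[u_\Delta]^n_j$. Consistency error $\epsilon^n_j=\frac{[u_\Delta]^{n+1}_j-[u_\Delta]^n_j}{\Delta t}+D(\frac{[u_\Delta]^2}{2})^n_j+\theta D_+D_+D_-([u_\Delta])^{n+1}_j+(1-\theta)D_+D_+D_-([u_\Delta])^n_j-\frac{c\Delta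 x}{2}D_+D_-([u_\Delta])^n_j$. *)

(* Defs.v *)
From Stdlib Require Import Reals ZArith.
From Coquelicot Require Import Coquelicot.
Open Scope R_scope.

Definition seqZ := Z -> R.

Definition Dp (dx : R) (a : seqZ) : seqZ := fun j => (a (j + 1)%Z - a j) / dx.
Definition Dm (dx : R) (a : seqZ) : seqZ := fun j => (a j - a (j - 1)%Z) / dx.
Definition Dc (dx : R) (a : seqZ) : seqZ := fun j => (Dp dx a j + Dm dx a j) / 2.

(* sum over Z of a sequence (meaningful when absolutely summable) *)
Definition sumZ (a : seqZ) : R :=
  Series (fun k => a (Z.of_nat k)) + Series (fun k => a (- Z.of_nat (S k))%Z).

Definition summableZ (a : seqZ) : Prop :=
  ex_series (fun k => Rabs (a (Z.of_nat k))) /\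
  ex_series (fun k => Rabs (a (- Z.of_nat (S k))%Z)).

Definition innerD (dx : R) (a b : seqZ) : R := dx * sumZ (fun j => a j * b j).
Definition normD (dx : R) (a : seqZ) : R := sqrt (innerD dx a a).

Definition in_l2 (a : seqZ) : Prop := summableZ (fun j => a j ^ 2).
Definition boundedZ (a : seqZ) : Prop := exists M, forall j, Rabs (a j) <= M.
Definition norminf (a : seqZ) : R :=
  real (Lub_Rbar (fun r => exists j, r = Rabs (a j))).

Definition D3 (dx : R) (a : seqZ) : seqZ := Dp dx (Dp dx (Dm dx a)).
Definition Atheta (dx dt th : R) (a : seqZ) : seqZ :=
  fun j => a j + th * dt * D3 dx a j.

(* Classical rendering of H^s(R), s a natural number: f has derivatives up
   to order s, each square integrable over R. *)
Definition Hs (s : nat) (f : R -> R) : Prop :=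
  forall k, (k <= s)%nat ->
    (forall x, ex_derive_n f k x) /\
    ex_RInt_gen (fun x => (Derive_n f k x) ^ 2)
      (Rbar_locally m_infty) (Rbar_locally p_infty).

Definition KdV_solution (s : nat) (T : R) (u0 : R -> R) (u : R -> R -> R) : Prop :=
  (forall x, u 0 x = u0 x) /\
  (forall t x, 0 <= t <= T ->
     continuous (fun p : R * R => u (fst p) (snd p)) (t, x)) /\
  (forall t, 0 <= t <= T -> Hs s (u t)) /\
  (forall t x, 0 < t < T ->
     ex_derive (fun s => u s x) t /\
     ex_derive (fun y => u t y ^ 2 / 2) x /\
     ex_derive_n (fun y => u t y) 3 x /\
     Derive (fun s => u s x) t + Derive (fun y => u t y ^ 2 / 2) x
       + Derive_n (fun y => u t y) 3 x = 0).

Definition tgrid (dt : R) (n : nat) : R := INR n * dt.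
Definition xgrid (dx : R) (j : Z) : R := IZR j * dx.

Definition Nsteps (T dt : R) : nat := Z.to_nat (Int_part (T / dt)).

Definition avg0 (dx : R) (u0 : R -> R) : seqZ :=
  fun j => RInt u0 (xgrid dx j) (xgrid dx (j + 1)) / dx.

Definition uavg (T dt dx : R) (u0 : R -> R) (u : R -> R -> R) (n : nat) : seqZ :=
  match n with
  | O => avg0 dx u0
  | S _ => fun j =>
      RInt (fun s => RInt (fun y => u s y) (xgrid dx j) (xgrid dx (j + 1)))
           (tgrid dt n) (Rmin (tgrid dt (S n)) T)
      / (dx * (Rmin (tgrid dt (S n)) T - tgrid dt n))
  end.

Definition scheme (dt dx c th : R) (v : nat -> seqZ) : Prop :=
  forall n j,
    (v (S n) j - v n j) / dt + Dc dx (fun i => v n i ^ 2 / 2) j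
    + th * D3 dx (v (S n)) j + (1 - th) * D3 dx (v n) j
    = c * dx / 2 * Dp dx (Dm dx (v n)) j.

Definition cons_err (dt dx c th : R) (w : nat -> seqZ) (n : nat) : seqZ :=
  fun j =>
    (w (S n) j - w n j) / dt + Dc dx (fun i => w n i ^ 2 / 2) j
    + th * D3 dx (w (S n)) j + (1 - th) * D3 dx (w n) j
    - c * dx / 2 * Dp dx (Dm dx (w n)) j.

Definition Xc (dx g E : R) : R :=
  Rpower dx (1/2 - g) + E + 9 * E ^ 2 * Rpower dx (g - 1/2).

Definition Ea (dt dx c U Up E : R) : R :=
  U ^ 2 * (1 + dt / dx)
  + Up * (7 + dt / dx * (2 * c + 2/3 * E + 3/2 * U))
  + Up ^ 2 * (sqrt 2 * sqrt dt / sqrt dx + dt ^ 2 / dx ^ 2)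
  + 1 + 2 * c ^ 2 * dt / dx.

Definition Cb (dt dx c th Up : R) (e : seqZ) : seqZ :=
  fun j => (dx / 6 * Dp dx e j - c) * (dx - c * dt) + (1 - th) * dt * Up.

Definition Cc (dx c U E : R) : R :=
  U ^ 2 + (E ^ 2 * (1 + dx) + 2 * E * U + 2 * c / 3 * E) - c ^ 2.

Definition Cd (dt dx c th Up Um X : R) : R :=
  4 / dx ^ 2 *
  (dt * ((1 - 2 * th) + (1 - th) * dx ^ 2 / 2 * (c + X / 2)
         + dt * (1 - th) * Up
         + (1 - th) * dx ^ 2 / 4 * (Up + dx / 2 * Um))
   - dx ^ 3 / 4).

Definition Ce (dt dx c th U Up E X : R) : R :=
  2 * (1 - th) * dt * (U + E + X / 2)
  - 4 * dt / dx ^ 2 *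
    ((1 - 2 * th) + (1 - th) * dx ^ 2 / 2 * (c + X / 2) + dt * (1 - th) * Up).

(* Main.v *)
Require Import Defs.
From Stdlib Require Import Reals ZArith Lra Lia Psatz FunctionalExtensionality.
From Coquelicot Require Import Coquelicot.
Open Scope R_scope.

Lemma Series_zero : Series (fun _ => 0) = 0.
Proof.
  rewrite (Series_ext (fun _ => 0) (fun n => 0 * 0)) by (intros; ring).
  rewrite Series_scal_l. ring.
Qed.

Lemma Series_nonneg (a : nat -> R) : (forall n, 0 <= a n) -> ex_series a -> 0 <= Series a.
Proof.
  intros H He. rewrite <- Series_zero. apply Series_le; auto. intros; split; [lra|auto].
Qed.

Lemma Series_ge_term (a : nat -> R) : (forall n, 0 <= a n) -> ex_series a -> forall n, a n <= Series a.
Proof.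
  intros H He n. revert a H He. induction n; intros a H He.
  - rewrite Series_incr_1 by auto. pose proof (Series_nonneg (fun k => a (S k))).
    assert (0 <= Series (fun k => a (S k))). apply H0; auto. apply ex_series_incr_1 in He; auto. lra.
  - rewrite Series_incr_1 by auto. pose proof (IHn (fun k => a (S k))). simpl in H0.
    assert (a (S n) <= Series (fun k => a (S k))). apply H0; auto. apply ex_series_incr_1 in He; auto.
    specialize (H 0%nat). lra.
Qed.

Lemma ex_series_abs_R (a : nat -> R) : ex_series (fun k => Rabs (a k)) -> ex_series a.
Proof. apply ex_series_Rabs. Qed.

Lemma summableZ_ex f : summableZ f ->
  ex_series (fun k => f (Z.of_nat k)) /\ ex_series (fun k => f (- Z.of_nat (S k))%Z).
Proof. intros [H1 H2]; split; apply ex_series_Rabs; auto. Qed.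

Lemma ex_series_le_R (a b : nat -> R) : (forall n, Rabs (a n) <= b n) -> ex_series b -> ex_series a.
Proof. intros H Hb. apply (ex_series_le a b); auto. Qed.

Lemma ex_series_plus_R (a b : nat -> R) : ex_series a -> ex_series b -> ex_series (fun n => a n + b n).
Proof. intros. apply (ex_series_plus a b); auto. Qed.

Lemma ex_series_scal_R (c : R) (a : nat -> R) : ex_series a -> ex_series (fun n => c * a n).
Proof. intros. apply (ex_series_scal_l c a); auto. Qed.

Lemma summableZ_le f g : (forall j, Rabs (f j) <= g j) -> summableZ g -> summableZ f.
Proof.
  intros H [H1 H2]. split.
  - apply (ex_series_le_R _ (fun k => Rabs (g (Z.of_nat k)))); auto.
    intros; rewrite Rabs_Rabsolu. specialize (H (Z.of_nat n)). pose proof (Rle_abs (g (Z.of_nat n))). lra.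
  - apply (ex_series_le_R _ (fun k => Rabs (g (- Z.of_nat (S k))%Z))); auto.
    intros; rewrite Rabs_Rabsolu. specialize (H (- Z.of_nat (S n))%Z). pose proof (Rle_abs (g (- Z.of_nat (S n))%Z)). lra.
Qed.

Lemma summableZ_plus f g : summableZ f -> summableZ g -> summableZ (fun j => f j + g j).
Proof.
  intros [F1 F2] [G1 G2]. split.
  - apply (ex_series_le_R _ (fun k => Rabs (f (Z.of_nat k)) + Rabs (g (Z.of_nat k)))).
    intros; rewrite Rabs_Rabsolu; apply Rabs_triang. apply ex_series_plus_R; auto.
  - apply (ex_series_le_R _ (fun k => Rabs (f (- Z.of_nat (S k))%Z) + Rabs (g (- Z.of_nat (S k))%Z))).
    intros; rewrite Rabs_Rabsolu; apply Rabs_triang. apply ex_series_plus_R; auto.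
Qed.

Lemma summableZ_scal c f : summableZ f -> summableZ (fun j => c * f j).
Proof.
  intros [F1 F2]. split.
  - apply (ex_series_le_R _ (fun k => Rabs c * Rabs (f (Z.of_nat k)))).
    intros; rewrite Rabs_Rabsolu, Rabs_mult; lra. apply ex_series_scal_R; auto.
  - apply (ex_series_le_R _ (fun k => Rabs c * Rabs (f (- Z.of_nat (S k))%Z))).
    intros; rewrite Rabs_Rabsolu, Rabs_mult; lra. apply ex_series_scal_R; auto.
Qed.

Lemma summableZ_ext f g : (forall j, f j = g j) -> summableZ f -> summableZ g.
Proof. intros H Hf. replace g with f; auto. apply functional_extensionality; auto. Qed.

Lemma summableZ_opp f : summableZ f -> summableZ (fun j => - f j).
Proof. intros. apply (summableZ_ext (fun j => (-1) * f j)). intros; ring. apply summableZ_scal; auto. Qed.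

Lemma summableZ_minus f g : summableZ f -> summableZ g -> summableZ (fun j => f j - g j).
Proof. intros. apply (summableZ_ext (fun j => f j + (- g j))). intros; ring. apply summableZ_plus; auto. apply summableZ_opp; auto. Qed.

Lemma summableZ_div f c : summableZ f -> summableZ (fun j => f j / c).
Proof. intros. apply (summableZ_ext (fun j => (/ c) * f j)). intros; unfold Rdiv; ring. apply summableZ_scal; auto. Qed.

Lemma sumZ_plus f g : summableZ f -> summableZ g -> sumZ (fun j => f j + g j) = sumZ f + sumZ g.
Proof.
  intros Hf Hg. destruct (summableZ_ex f Hf), (summableZ_ex g Hg). unfold sumZ.
  rewrite (Series_plus (fun k => f (Z.of_nat k)) (fun k => g (Z.of_nat k))) by auto.
  rewrite (Series_plus (fun k => f (- Z.of_nat (S k))%Z) (fun k => g (- Z.of_nat (S k))%Z)) by auto. ring.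
Qed.

Lemma sumZ_scal c f : sumZ (fun j => c * f j) = c * sumZ f.
Proof. unfold sumZ. rewrite !Series_scal_l. ring. Qed.

Lemma sumZ_opp f : sumZ (fun j => - f j) = - sumZ f.
Proof. rewrite (functional_extensionality (fun j => - f j) (fun j => (-1) * f j)) by (intros; ring).
  rewrite sumZ_scal; ring. Qed.

Lemma sumZ_minus f g : summableZ f -> summableZ g -> sumZ (fun j => f j - g j) = sumZ f - sumZ g.
Proof. intros. rewrite (functional_extensionality (fun j => f j - g j) (fun j => f j + (- g j))) by (intros; ring).
  rewrite sumZ_plus; auto. rewrite sumZ_opp; ring. apply summableZ_opp; auto. Qed.

Lemma sumZ_ext f g : (forall j, f j = g j) -> sumZ f = sumZ g.
Proof. intros H. replace g with f; auto. apply functional_extensionality; auto. Qed.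

Lemma sumZ_nonneg f : summableZ f -> (forall j, 0 <= f j) -> 0 <= sumZ f.
Proof. intros Hf H. destruct (summableZ_ex f Hf). unfold sumZ.
  pose proof (Series_nonneg (fun k => f (Z.of_nat k))). pose proof (Series_nonneg (fun k => f (- Z.of_nat (S k))%Z)).
  assert (0 <= Series (fun k => f (Z.of_nat k))) by (apply H2; auto).
  assert (0 <= Series (fun k => f (- Z.of_nat (S k))%Z)) by (apply H3; auto). lra. Qed.

Lemma sumZ_le f g : summableZ f -> summableZ g -> (forall j, f j <= g j) -> sumZ f <= sumZ g.
Proof. intros. assert (0 <= sumZ (fun j => g j - f j)). apply sumZ_nonneg. apply summableZ_minus; auto.
  intros; specialize (H1 j); lra. rewrite sumZ_minus in H2; auto. lra. Qed.

Lemma summableZ_shift1 f : summableZ f -> summableZ (fun j => f (j + 1)%Z).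
Proof.
  intros [H1 H2]. split.
  - apply ex_series_incr_1 in H1. eapply ex_series_ext; [|exact H1]. intros k; cbv beta.
    apply f_equal; apply f_equal; lia.
  - apply (ex_series_incr_1 (fun k => Rabs (f (- Z.of_nat k)%Z))) in H2.
    eapply ex_series_ext; [|exact H2]. intros k; cbv beta. apply f_equal; apply f_equal; lia.
Qed.

Lemma summableZ_shiftm1 f : summableZ f -> summableZ (fun j => f (j - 1)%Z).
Proof.
  intros [H1 H2]. split.
  - set (b := fun k => match k with O => Rabs (f (-1)%Z) | S k' => Rabs (f (Z.of_nat k')) end).
    assert (ex_series b). apply ex_series_incr_1. simpl. exact H1.
    eapply ex_series_ext; [|exact H]. intros k; destruct k as [|k]; unfold b; cbv beta iota; [reflexivity|].
    apply f_equal; apply f_equal; rewrite Nat2Z.inj_succ; lia.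
  - apply ex_series_incr_1 in H2. eapply ex_series_ext; [|exact H2]. intros k; cbv beta.
    apply f_equal; apply f_equal; lia.
Qed.

Lemma summableZ_shift f m : summableZ f -> summableZ (fun j => f (j + m)%Z).
Proof.
  intros Hf. destruct (Z_le_gt_dec 0 m).
  - rewrite <- (Z2Nat.id m) by lia. generalize (Z.to_nat m) as n. induction n.
    + simpl. eapply summableZ_ext; [|exact Hf]. intros; f_equal; lia.
    + eapply summableZ_ext; [|apply (summableZ_shift1 _ IHn)]. intros; simpl. f_equal. lia.
  - replace m with (- Z.of_nat (Z.to_nat (- m)))%Z by lia. generalize (Z.to_nat (-m)) as n. induction n.
    + simpl. eapply summableZ_ext; [|exact Hf]. intros; f_equal; lia.
    + eapply summableZ_ext; [|apply (summableZ_shiftm1 _ IHn)]. intros; simpl. f_equal. lia.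
Qed.

Lemma sumZ_shift1 f : summableZ f -> sumZ (fun j => f (j + 1)%Z) = sumZ f.
Proof.
  intros Hf. destruct (summableZ_ex f Hf) as [P N]. unfold sumZ.
  rewrite (Series_incr_1 (fun k => f (Z.of_nat k))) by auto.
  assert (Nb: ex_series (fun k => f (- Z.of_nat k)%Z)).
  { apply ex_series_incr_1. exact N. }
  rewrite (Series_ext (fun k => f (- Z.of_nat (S k) + 1)%Z) (fun k => f (- Z.of_nat k)%Z)) by (intros; f_equal; lia).
  rewrite (Series_incr_1 (fun k => f (- Z.of_nat k)%Z)) by auto.
  rewrite (Series_ext (fun k => f (Z.of_nat k + 1)%Z) (fun k => f (Z.of_nat (S k)))) by (intros; f_equal; lia).
  simpl. ring.
Qed.

Lemma sumZ_shift f m : summableZ f -> sumZ (fun j => f (j + m)%Z) = sumZ f.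
Proof.
  intros Hf. destruct (Z_le_gt_dec 0 m).
  - rewrite <- (Z2Nat.id m) by lia. generalize (Z.to_nat m) as n. induction n.
    + simpl. apply sumZ_ext. intros; f_equal; lia.
    + rewrite <- IHn. rewrite <- (sumZ_shift1 (fun j => f (j + Z.of_nat n)%Z)).
      apply sumZ_ext; intros; cbv beta; f_equal; rewrite ?Nat2Z.inj_succ; lia.
      apply summableZ_shift; auto.
  - replace m with (- Z.of_nat (Z.to_nat (- m)))%Z by lia. generalize (Z.to_nat (-m)) as n. induction n.
    + simpl. apply sumZ_ext. intros; f_equal; lia.
    + rewrite <- IHn. rewrite <- (sumZ_shift1 (fun j => f (j + - Z.of_nat (S n))%Z)).
      apply sumZ_ext; intros; cbv beta; f_equal; rewrite ?Nat2Z.inj_succ; lia. apply summableZ_shift; auto.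
Qed.

Lemma sumZ_tele T : summableZ T -> sumZ (fun j => T (j + 1)%Z - T j) = 0.
Proof. intros. rewrite sumZ_minus; auto. rewrite sumZ_shift1; auto. ring. apply summableZ_shift1; auto. Qed.

Lemma sumZ_le_tele f g T : summableZ f -> summableZ g -> summableZ T ->
  (forall j, f j <= g j + (T (j + 1)%Z - T j)) -> sumZ f <= sumZ g.
Proof.
  intros Hf Hg HT H. pose proof (sumZ_tele T HT).
  assert (sumZ f <= sumZ (fun j => g j + (T (j + 1)%Z - T j))).
  apply sumZ_le; auto. apply summableZ_plus; auto. apply summableZ_minus; auto. apply summableZ_shift1; auto.
  rewrite sumZ_plus in H1; auto. lra. apply summableZ_minus; auto. apply summableZ_shift1; auto.
Qed.

Lemma sumZ_eq_tele f g T : summableZ f -> summableZ g -> summableZ T ->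
  (forall j, f j = g j + (T (j + 1)%Z - T j)) -> sumZ f = sumZ g.
Proof.
  intros. apply Rle_antisym. apply (sumZ_le_tele f g T); auto. intros; rewrite H2; lra.
  apply (sumZ_le_tele g f (fun j => - T j)); auto. apply summableZ_opp; auto. intros; rewrite H2; lra.
Qed.

Lemma l2_plus f g : in_l2 f -> in_l2 g -> in_l2 (fun j => f j + g j).
Proof. unfold in_l2 in *; intros; cbv beta in *. apply (summableZ_le _ (fun j => 2 * f j ^ 2 + 2 * g j ^ 2)).
  intros; cbv beta. rewrite Rabs_right by (apply Rle_ge; apply pow2_ge_0). pose proof (pow2_ge_0 (f j - g j)). nra. apply summableZ_plus; apply summableZ_scal; auto. Qed.

Lemma l2_scal c f : in_l2 f -> in_l2 (fun j => c * f j).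
Proof. unfold in_l2 in *; intros; cbv beta in *. apply (summableZ_ext (fun j => c^2 * f j ^ 2)). intros; ring.
  apply summableZ_scal; auto. Qed.

Lemma l2_opp f : in_l2 f -> in_l2 (fun j => - f j).
Proof. unfold in_l2 in *; intros; cbv beta in *. apply (summableZ_ext (fun j => f j ^ 2)). intros; ring. auto. Qed.

Lemma l2_minus f g : in_l2 f -> in_l2 g -> in_l2 (fun j => f j - g j).
Proof. intros. apply (summableZ_ext (fun j => (f j + - g j)^2)). intros; ring.
  apply l2_plus; auto. apply l2_opp; auto. Qed.

Lemma l2_div f c : in_l2 f -> in_l2 (fun j => f j / c).
Proof. intros. apply (summableZ_ext (fun j => (/c * f j)^2)). intros; unfold Rdiv; ring. apply l2_scal; auto. Qed.

Lemma l2_shift f m : in_l2 f -> in_l2 (fun j => f (j + m)%Z).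
Proof. unfold in_l2 in *; intros; cbv beta in *. apply (summableZ_shift (fun j => f j ^ 2)); auto. Qed.

Lemma l1_mul f g : in_l2 f -> in_l2 g -> summableZ (fun j => f j * g j).
Proof. unfold in_l2 in *; intros; cbv beta in *. apply (summableZ_le _ (fun j => / 2 * f j ^ 2 + / 2 * g j ^ 2)).
  intros; cbv beta. rewrite Rabs_mult. pose proof (pow2_ge_0 (Rabs (f j) - Rabs (g j))).
  rewrite <- (pow2_abs (f j)), <- (pow2_abs (g j)). nra.

  apply summableZ_plus; apply summableZ_scal; auto. Qed.

Lemma l1_sq f : in_l2 f -> summableZ (fun j => f j ^ 2).
Proof. auto. Qed.

Definition bnd (f : seqZ) := exists M, forall j, Rabs (f j) <= M.

Lemma l1_bmul f g : bnd f -> summableZ g -> summableZ (fun j => f j * g j).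
Proof. intros [M HM] Hg. apply (summableZ_le _ (fun j => M * Rabs (g j))).
  intros; rewrite Rabs_mult. specialize (HM j). pose proof (Rabs_pos (g j)). pose proof (Rabs_pos (f j)). nra.
  apply summableZ_scal. destruct Hg as [G1 G2]; split; [eapply ex_series_ext; [|exact G1]|eapply ex_series_ext; [|exact G2]];
  intros; cbv beta; rewrite Rabs_Rabsolu; reflexivity.
Qed.

Lemma l2_bmul f g : bnd f -> in_l2 g -> in_l2 (fun j => f j * g j).
Proof. intros [M HM] Hg. unfold in_l2. apply (summableZ_ext (fun j => f j ^ 2 * g j ^ 2)). intros; ring.
  apply l1_bmul; auto. exists (M^2). intros. specialize (HM j). rewrite <- RPow_abs. pose proof (Rabs_pos (f j)).
  apply pow_incr; lra. Qed.

Lemma bnd_plus f g : bnd f -> bnd g -> bnd (fun j => f j + g j).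
Proof. intros [M HM] [N HN]. exists (M + N). intros. eapply Rle_trans. apply Rabs_triang. specialize (HM j); specialize (HN j); lra. Qed.
Lemma bnd_scal c f : bnd f -> bnd (fun j => c * f j).
Proof. intros [M HM]. exists (Rabs c * M). intros. rewrite Rabs_mult. specialize (HM j). pose proof (Rabs_pos c). nra. Qed.
Lemma bnd_minus f g : bnd f -> bnd g -> bnd (fun j => f j - g j).
Proof. intros. apply (bnd_plus f (fun j => (-1) * g j)) in H. destruct H as [M HM]; exists M; intros; specialize (HM j);
  replace (f j - g j) with (f j + -1 * g j) by ring; auto. apply bnd_scal; auto. Qed.
Lemma bnd_div f c : bnd f -> bnd (fun j => f j / c).
Proof. intros. destruct (bnd_scal (/c) f H) as [M HM]. exists M; intros; unfold Rdiv; rewrite Rmult_comm; auto. Qed.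
Lemma bnd_mul f g : bnd f -> bnd g -> bnd (fun j => f j * g j).
Proof. intros [M HM] [N HN]. exists (M * N). intros. rewrite Rabs_mult. specialize (HM j); specialize (HN j).
  pose proof (Rabs_pos (f j)); pose proof (Rabs_pos (g j)). apply Rmult_le_compat; auto. Qed.
Lemma bnd_shift f m : bnd f -> bnd (fun j => f (j + m)%Z).
Proof. intros [M HM]. exists M; auto. Qed.
Lemma bnd_const c : bnd (fun _ => c).
Proof. exists (Rabs c). intros; lra. Qed.

Lemma l2_bnd f : in_l2 f -> bnd f.
Proof.
  intros [H1 H2]. apply ex_series_Rabs in H1. apply ex_series_Rabs in H2.
  exists (1 + (Series (fun k => f (Z.of_nat k) ^ 2) + Series (fun k => f (- Z.of_nat (S k))%Z ^ 2))).
  assert (A1 := Series_nonneg (fun k => f (Z.of_nat k) ^ 2) (fun n => pow2_ge_0 _) H1).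
  assert (A2 := Series_nonneg (fun k => f (- Z.of_nat (S k))%Z ^ 2) (fun n => pow2_ge_0 _) H2).
  intros j. assert (f j ^ 2 <= Series (fun k => f (Z.of_nat k) ^ 2) + Series (fun k => f (- Z.of_nat (S k))%Z ^ 2)).
  { destruct (Z_le_gt_dec 0 j).
    - pose proof (Series_ge_term _ (fun n => pow2_ge_0 _) H1 (Z.to_nat j)). cbv beta in H. rewrite Z2Nat.id in H by lia. lra.
    - pose proof (Series_ge_term _ (fun n => pow2_ge_0 _) H2 (Z.to_nat (- j - 1))). cbv beta in H.
      replace (- Z.of_nat (S (Z.to_nat (- j - 1))))%Z with j in H by lia. lra. }
  rewrite <- (pow2_abs (f j)) in H. pose proof (Rabs_pos (f j)). nra.
Qed.

Lemma l1_bnd3 f : bnd f -> in_l2 f -> summableZ (fun j => f j ^ 3).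
Proof. intros. apply (summableZ_ext (fun j => f j * f j ^ 2)). intros; ring. apply l1_bmul; auto. Qed.

Lemma norminf_ge f : bnd f -> forall j, Rabs (f j) <= norminf f.
Proof.
  intros [M HM] j. unfold norminf.
  destruct (Lub_Rbar_correct (fun r => exists j, r = Rabs (f j))) as [Hub Hl].
  assert (Hle : Rbar_le (Lub_Rbar (fun r => exists j, r = Rabs (f j))) M).
  { apply Hl. intros x [i ->]. simpl. auto. }
  specialize (Hub (Rabs (f j)) (ex_intro _ j eq_refl)).
  destruct (Lub_Rbar (fun r => exists j, r = Rabs (f j))); simpl in *; auto; contradiction.
Qed.

Lemma norminf_nonneg f : bnd f -> 0 <= norminf f.
Proof. intros. pose proof (norminf_ge f H 0%Z). pose proof (Rabs_pos (f 0%Z)). lra. Qed.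

Ltac zlit c := lazymatch c with Z0 => idtac | Zpos _ => idtac | Zneg _ => idtac end.
Ltac znorm_step := match goal with
 | |- context [Z.opp ?c] => zlit c; let v := eval vm_compute in (Z.opp c) in change (Z.opp c) with v
 | |- context [(?x + ?c1 + ?c2)%Z] => zlit c1; zlit c2; let v := eval vm_compute in (c1 + c2)%Z in
        replace (x + c1 + c2)%Z with (x + v)%Z by (rewrite <- Z.add_assoc; reflexivity)
 | |- context [(?x + Z0)%Z] => rewrite Z.add_0_r
 end.
Ltac znorm := unfold Z.sub; repeat znorm_step.



Lemma abs_le_iff d M : Rabs d <= M -> - M <= d <= M.
Proof. intros. split; [apply Ropp_le_cancel; rewrite Ropp_involutive; eapply Rle_trans; [apply Rle_abs|]; rewrite Rabs_Ropp; auto | eapply Rle_trans; [apply Rle_abs|auto]]. Qed.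

Lemma prod_bound d M x y : Rabs d <= M -> d * x * y <= M * (x^2 + y^2) / 2.
Proof. intros H. apply abs_le_iff in H. destruct H.
  assert (0 <= (M + d) * (x - y)^2) by (apply Rmult_le_pos; [lra|apply pow2_ge_0]).
  assert (0 <= (M - d) * (x + y)^2) by (apply Rmult_le_pos; [lra|apply pow2_ge_0]).
  nra. Qed.

Lemma sq_bound d M x : Rabs d <= M -> d * x^2 <= M * x^2.
Proof. intros H. apply abs_le_iff in H. pose proof (pow2_ge_0 x). nra. Qed.

Lemma PW_G2 h Up a0 a1 w0 w1 : 0 < h -> Rabs (w1 - w0) <= h * Up ->
  - / h * a0 * a1 * (w1 - w0) <= Up * (a0^2 + a1^2) / 2.
Proof. intros Hh H. pose proof (prod_bound (-(w1 - w0)) (h*Up) a0 a1). rewrite Rabs_Ropp in H0. specialize (H0 H).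
  assert (- / h * a0 * a1 * (w1 - w0) = / h * (-(w1-w0) * a0 * a1)) by ring. rewrite H1.
  apply Rmult_le_compat_l with (r := / h) in H0; [|left; apply Rinv_0_lt_compat; auto].
  eapply Rle_trans; [exact H0|]. right. field. lra. Qed.

Lemma PW_G5 h Up a0 a1 a2 w0 w1 w2 : 0 < h -> Rabs (w1 - w0) <= h * Up -> Rabs (w2 - w0) <= 2 * h * Up ->
  - (1/2) * / h ^ 3 * (a0 * a2 * (w2 - w0) - 2 * a0 * a1 * (w1 - w0))
  <= Up * (1/2) * / h ^ 2 * ((a0^2 + a2^2) + (a0^2 + a1^2)).
Proof. intros Hh H1 H2.
  pose proof (prod_bound (-(w2 - w0)) (2*h*Up) a0 a2). rewrite Rabs_Ropp in H. specialize (H H2).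
  pose proof (prod_bound (w1 - w0) (h*Up) a0 a1 H1).
  assert (0 < / h ^ 3) by (apply Rinv_0_lt_compat; apply pow_lt; auto).
  assert (E: - (1/2) * / h ^ 3 * (a0 * a2 * (w2 - w0) - 2 * a0 * a1 * (w1 - w0)) = (1/2) * / h^3 * ((-(w2-w0)) * a0 * a2 + 2 * ((w1 - w0) * a0 * a1))) by ring.
  rewrite E. apply Rle_trans with ((1/2) * / h^3 * (2 * h * Up * (a0^2 + a2^2) / 2 + 2 * (h * Up * (a0^2 + a1^2) / 2))).
  apply Rmult_le_compat_l. lra. lra. right. field. lra. Qed.

Lemma PW_G4 h E D : Rabs (h * D) <= E -> h * D^3 <= E * D^2.
Proof. intros H. replace (h * D^3) with ((h*D) * D^2) by ring. apply sq_bound; auto. Qed.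

Lemma PW_I1 Z e : - 2 * Z * e <= Z^2 + e^2.
Proof. pose proof (pow2_ge_0 (Z + e)). nra. Qed.

Lemma PW_I4 h N e : 0 < h -> (N + e)^2 <= (1 + h/2) * N^2 + (1 + 2/h) * e^2.
Proof. intros. assert (0 <= (h*N - 2*e)^2 / (2*h)). apply Rmult_le_pos. apply pow2_ge_0. left; apply Rinv_0_lt_compat; lra.
  replace ((1 + h/2) * N^2 + (1 + 2/h) * e^2) with ((N+e)^2 + (h*N - 2*e)^2 / (2*h)) by (field; lra). lra. Qed.

Lemma PW_I3 h c am a0 ap e : 0 < h ->
  - c * h * ((ap - 2 * a0 + am) / h^2) * e <= / h * (c^2 / 2 * (ap^2 + 2 * a0^2 + am^2) + 2 * e^2).
Proof. intros Hh. set (L := ap - 2*a0 + am).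
  assert (L^2 <= 4 * (ap^2 + 2*a0^2 + am^2)). { unfold L. pose proof (pow2_ge_0 (ap + a0)). pose proof (pow2_ge_0 (a0 + am)). pose proof (pow2_ge_0 (ap - am)). nra. }
  assert (- c * L * e <= c^2 * L^2 / 8 + 2 * e^2). { pose proof (pow2_ge_0 (c * L / 2 + 2 * e)).
    replace ((c * L / 2 + 2 * e)^2) with (2 * (c^2 * L^2 / 8 + 2 * e^2 - (- c * L * e))) in H0 by field. lra. }
  replace (- c * h * (L / h^2) * e) with (/h * (- c * L * e)) by (field; lra).
  apply Rmult_le_compat_l. left; apply Rinv_0_lt_compat; lra. pose proof (pow2_ge_0 c). nra. Qed.

Lemma PW_H2 k Up s x y dw : 0 < k -> Rabs dw <= Up ->
  2 * s * ((x + y) / 2) * dw <= k * Up * s^2 + Up / k * ((x^2 + y^2) / 2).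
Proof. intros Hk H. pose proof (prod_bound dw Up (k*s) ((x+y)/2) H).
  assert (((x+y)/2)^2 <= (x^2+y^2)/2) by (pose proof (pow2_ge_0 (x-y)); nra).
  assert (0 <= Up) by (pose proof (Rabs_pos dw); lra).
  assert (2 * s * ((x + y) / 2) * dw = 2 / k * (dw * (k*s) * ((x+y)/2))) by (field; lra). rewrite H3.
  apply Rle_trans with (2 / k * (Up * ((k * s)^2 + ((x + y) / 2)^2) / 2)).
  apply Rmult_le_compat_l. apply Rlt_le, Rdiv_lt_0_compat; lra. auto.
  replace (2 / k * (Up * ((k * s) ^ 2 + ((x + y) / 2) ^ 2) / 2)) with (k * Up * s^2 + Up / k * ((x+y)/2)^2) by (field; lra).
  apply Rplus_le_compat_l. apply Rmult_le_compat_l. unfold Rdiv; apply Rmult_le_pos; [lra|left; apply Rinv_0_lt_compat; lra]. auto. Qed.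

Ltac posprod := repeat (first [apply pow2_ge_0 | apply Rmult_le_pos | lra]).

Lemma Rabs_le_between x M : - M <= x <= M -> Rabs x <= M.
Proof. intros. apply Rabs_le. lra. Qed.

Lemma PW_H1 h U Up Um qm1 q0 wbm1 wb0 wb1 pm1 pm2 : 0 < h ->
  Rabs wb0 <= U -> Rabs (wb1 - wb0) <= h * Um -> Rabs (wb0 - wbm1) <= h * Up ->
  - wb0 * (q0 + qm1)^2 / 2 - q0^2 * (wb0 - wb1) / 2 - 2 / h * q0 * ((pm1 + pm2)/2) * (wb0 - wbm1)
  <= 2 * U * ((qm1 + q0)/2)^2 + (h * Um / 2 + Up) * q0^2 + Up * (pm1^2 + pm2^2) / 2.
Proof. intros Hh H1 H2 H3.
  assert (A: - wb0 * (q0 + qm1)^2 <= U * (q0 + qm1)^2) by (apply sq_bound; rewrite Rabs_Ropp; auto).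
  assert (B: (wb1 - wb0) * q0^2 <= h * Um * q0^2) by (apply sq_bound; auto).
  pose proof (prod_bound (-(wb0 - wbm1)) (h * Up) q0 ((pm1+pm2)/2)). rewrite Rabs_Ropp in H. specialize (H H3).
  assert (Up0: 0 <= Up). { pose proof (Rabs_pos (wb0 - wbm1)). assert (0 <= h * Up) by lra. nra. }
  assert (((pm1 + pm2)/2)^2 <= (pm1^2 + pm2^2)/2) by (pose proof (pow2_ge_0 (pm1 - pm2)); nra).
  assert (C: - 2 / h * q0 * ((pm1 + pm2)/2) * (wb0 - wbm1) = 2 / h * (-(wb0 - wbm1) * q0 * ((pm1 + pm2)/2))) by (field; lra).
  assert (C2: 2 / h * (-(wb0 - wbm1) * q0 * ((pm1 + pm2)/2)) <= 2 / h * (h * Up * (q0 ^ 2 + ((pm1 + pm2) / 2) ^ 2) / 2)).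
  { apply Rmult_le_compat_l; auto. unfold Rdiv; apply Rmult_le_pos; [lra|left; apply Rinv_0_lt_compat; lra]. }
  replace (2 / h * (h * Up * (q0 ^ 2 + ((pm1 + pm2) / 2) ^ 2) / 2)) with (Up * q0^2 + Up * ((pm1 + pm2) / 2) ^ 2) in C2 by (field; lra).
  assert (Up * ((pm1 + pm2) / 2) ^ 2 <= Up * ((pm1^2 + pm2^2)/2)) by (apply Rmult_le_compat_l; auto).
  replace (2 * U * ((qm1 + q0)/2)^2) with (U * (q0 + qm1)^2 / 2) by field.
  replace (- wb0 * (q0 + qm1)^2 / 2 - q0^2 * (wb0 - wb1) / 2 - 2 / h * q0 * ((pm1 + pm2)/2) * (wb0 - wbm1))
   with ((- wb0 * (q0 + qm1)^2) / 2 + ((wb1 - wb0) * q0^2) / 2 + (- 2 / h * q0 * ((pm1 + pm2)/2) * (wb0 - wbm1))) by (field; lra).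
  rewrite C. lra.
Qed.

Lemma PW_H3 h E am2 am1 a0 a1 a2 : 0 < h ->
  Rabs am2 <= E -> Rabs am1 <= E -> Rabs a0 <= E -> Rabs a1 <= E -> Rabs a2 <= E ->
  let qm1 := (a0 - 2 * am1 + am2) / h^2 in
  let q0 := (a1 - 2 * a0 + am1) / h^2 in
  let ab0 := (a1 + am1) / 2 in let ab1 := (a2 + a0) / 2 in
  let Dm1 := (a0 - am2) / (2 * h) in let D0 := (a1 - am1) / (2 * h) in
  let rm1 := (qm1 + q0) / 2 in
  - ab0 * (q0 + qm1)^2 / 2 - q0^2 * (ab0 - ab1) / 2 - h * q0^2 * Dm1 - h^2 / 6 * qm1^3 + 4 * h / 3 * rm1^2 * (D0 + 2 * Dm1)
  <= 2 * E * rm1^2 + 2 * E * q0^2 + 2/3 * E * qm1^2 + 2 * E * (qm1^2 + q0^2) + 1/3 * E * q0^2.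
Proof. intros Hh B2 B1 B0 Bp1 Bp2 qm1 q0 ab0 ab1 Dm1 D0 rm1.
  apply abs_le_iff in B2, B1, B0, Bp1, Bp2.
  assert (E0: 0 <= E) by lra.
  assert (A: - ab0 * (q0 + qm1)^2 <= E * (q0 + qm1)^2) by (apply sq_bound; apply Rabs_le_between; unfold ab0; lra).
  assert (B: (ab1 - ab0) * q0^2 <= 2 * E * q0^2) by (apply sq_bound; apply Rabs_le_between; unfold ab0, ab1; lra).
  assert (C: (- (h * Dm1)) * q0^2 <= E * q0^2).
  { apply sq_bound. apply Rabs_le_between. unfold Dm1. replace (- (h * ((a0 - am2) / (2 * h)))) with (- ((a0 - am2)/2)) by (field; lra). lra. }
  assert (D: (- (h^2 * qm1)) * qm1^2 <= 4 * E * qm1^2).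
  { apply sq_bound. apply Rabs_le_between. unfold qm1. replace (- (h^2 * ((a0 - 2 * am1 + am2) / h ^ 2))) with (- (a0 - 2 * am1 + am2)) by (field; lra). lra. }
  assert (F: (h * (D0 + 2 * Dm1)) * rm1^2 <= 3 * E * rm1^2).
  { apply sq_bound. apply Rabs_le_between. unfold D0, Dm1. replace (h * ((a1 - am1) / (2 * h) + 2 * ((a0 - am2) / (2 * h)))) with ((a1 - am1)/2 + (a0 - am2)) by (field; lra). lra. }
  assert (G: rm1^2 <= (qm1^2 + q0^2)/2) by (unfold rm1; pose proof (pow2_ge_0 (qm1 - q0)); nra).
  assert (G2: 4 * E * rm1^2 <= 4 * E * ((qm1^2 + q0^2)/2)) by (apply Rmult_le_compat_l; lra).
  assert (R: 2 * E * rm1^2 = E * (q0 + qm1)^2 / 2) by (unfold rm1; field).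
  replace (- ab0 * (q0 + qm1)^2 / 2 - q0^2 * (ab0 - ab1) / 2 - h * q0^2 * Dm1 - h^2 / 6 * qm1^3 + 4 * h / 3 * rm1^2 * (D0 + 2 * Dm1))
    with ((- ab0 * (q0 + qm1)^2) / 2 + ((ab1 - ab0) * q0^2) / 2 + (- (h * Dm1)) * q0^2 + ((- (h^2 * qm1)) * qm1^2) / 6 + 4 / 3 * ((h * (D0 + 2 * Dm1)) * rm1^2)) by field.
  pose proof (pow2_ge_0 q0). assert (0 <= E * q0^2) by (apply Rmult_le_pos; auto). lra.
Qed.

Lemma abs_avg_diff W1 W2 U : Rabs W1 <= U -> Rabs W2 <= U -> Rabs ((W1 + W2)/2) + Rabs (W1 - W2) / 2 <= U.
Proof. intros H1 H2. apply abs_le_iff in H1, H2.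
  unfold Rabs; destruct (Rcase_abs ((W1 + W2)/2)); destruct (Rcase_abs (W1 - W2)); lra. Qed.

Lemma B8_core h k U E nu u s e : 0 < h -> 0 < k -> 0 <= u -> u <= nu -> u <= U -> 0 <= s -> 0 <= e -> s + e <= E ->
  let F := (U - u + s) * e + s * u in
  (1 + h/2) * F^2 <= ((U + E)^2 + h * E^2) * e^2
     + (U^2 * h^2 / k + U^2 * h + nu * (2 * E / 3 + 3 * U / 2) + nu^2 * k / h^2) * (s^2 + e^2).
Proof. intros Hh Hk Hu0 Hun HuU Hs He HE F.
  assert (U0: 0 <= U) by lra. assert (E0: 0 <= E) by lra.
  assert (P1: F^2 <= (U+E)^2 * e^2 + (U*u + 2*E/3*u + u^2) * (s^2 + e^2)).
  { assert (i: (U+s)^2 * e^2 <= (U+E)^2 * e^2). { apply Rmult_le_compat_r. apply pow2_ge_0. apply pow_incr. lra. }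
    assert (ii: 2 * (U + s) * e * u * (s - e) <= U * u * (s^2 + e^2) + 2 * u * s^2 * e).
    { assert (0 <= 2 * (U+s) * u * e^2) by posprod.
      assert (2 * U * u * s * e <= U * u * (s^2 + e^2)).
      { assert (0 <= U * u * (s - e)^2) by posprod. nra. }
      nra. }
    assert (iii: 2 * u * s^2 * e <= 2/3 * u * E * (s^2 + e^2)).
    { assert (3 * s^2 * e <= (s + e) * (s^2 + e^2)).
      { assert (0 <= s * (s - e)^2) by (apply Rmult_le_pos; [lra|apply pow2_ge_0]). assert (0 <= e^3) by (apply pow_le; lra). nra. }
      assert ((s + e) * (s^2 + e^2) <= E * (s^2 + e^2)) by (apply Rmult_le_compat_r; [pose proof (pow2_ge_0 s); pose proof (pow2_ge_0 e); lra|lra]).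
      assert (0 <= u) by lra. nra. }
    assert (iv: u^2 * (s - e)^2 <= u^2 * (s^2 + e^2)).
    { apply Rmult_le_compat_l. apply pow2_ge_0. nra. }
    assert (Fe: F = (U + s) * e + u * (s - e)) by (unfold F; ring).
    rewrite Fe. replace (((U + s) * e + u * (s - e))^2) with ((U+s)^2 * e^2 + 2 * (U + s) * e * u * (s - e) + u^2 * (s - e)^2) by ring.
    nra. }
  assert (P2: F^2 <= 2 * (U^2 * e^2 + E^2 * e^2 + U^2 * s^2)).
  { assert (c1: ((U - u) * e + u * s)^2 <= U * ((U - u) * e^2 + u * s^2)).
    { assert (0 <= (U - u) * u * (e - s)^2) by posprod. nra. }
    assert (c2: U * ((U - u) * e^2 + u * s^2) <= U^2 * e^2 + U^2 * s^2).
    { assert (0 <= U * u * e^2) by posprod.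
      assert (0 <= U * (U - u) * s^2) by posprod. nra. }
    assert (c3: (s * e)^2 <= E^2 * e^2). { rewrite Rpow_mult_distr. apply Rmult_le_compat_r. apply pow2_ge_0. apply pow_incr; lra. }
    assert (Fe: F = ((U - u) * e + u * s) + s * e) by (unfold F; ring).
    rewrite Fe. pose proof (pow2_ge_0 (((U - u) * e + u * s) - s * e)). nra. }
  assert (P3: U*u + 2*E/3*u + u^2 + h * U^2 <= U^2 * h^2 / k + U^2 * h + nu * (2 * E / 3 + 3 * U / 2) + nu^2 * k / h^2).
  { assert (U * nu / 2 <= U^2 * h^2 / k + nu^2 * k / h^2).
    { assert (0 <= (nu * k / h - U * h)^2 / k) by (apply Rmult_le_pos; [apply pow2_ge_0|left; apply Rinv_0_lt_compat; lra]).
      replace ((nu * k / h - U * h)^2 / k) with (nu^2 * k / h^2 + U^2 * h^2 / k - 2 * U * nu) in H by (field; lra).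
      assert (0 <= U * nu) by nra. lra. }
    assert (u^2 <= U * nu) by nra. assert (U * u <= U * nu) by nra. assert (2*E/3*u <= 2*E/3*nu) by nra. nra. }
  assert (0 <= s^2 + e^2) by (pose proof (pow2_ge_0 s); pose proof (pow2_ge_0 e); lra).
  assert (h * F^2 / 2 <= h * (U^2 * e^2 + E^2 * e^2 + U^2 * s^2)).
  { apply Rmult_le_reg_l with (r := 2). lra. replace (2 * (h * F^2 / 2)) with (h * F^2) by field.
    replace (2 * (h * (U ^ 2 * e ^ 2 + E ^ 2 * e ^ 2 + U ^ 2 * s ^ 2))) with (h * (2 * (U ^ 2 * e ^ 2 + E ^ 2 * e ^ 2 + U ^ 2 * s ^ 2))) by ring.
    apply Rmult_le_compat_l; lra. }
  assert ((U*u + 2*E/3*u + u^2 + h * U^2) * (s^2 + e^2) <= (U^2 * h^2 / k + U^2 * h + nu * (2 * E / 3 + 3 * U / 2) + nu^2 * k / h^2) * (s^2 + e^2)).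
  { apply Rmult_le_compat_r; auto. }
  replace ((1 + h/2) * F^2) with (F^2 + h * F^2 / 2) by field. nra.
Qed.

Lemma PW_B8 h k U E Up x y W1 W2 : 0 < h -> 0 < k -> Rabs x <= E -> Rabs y <= E ->
  Rabs W1 <= U -> Rabs W2 <= U -> Rabs (W1 - W2) <= 2 * h * Up ->
  (1 + h/2) * (((W1 * x - W2 * y) + (x^2 - y^2)/2) / (2 * h))^2
  <= ((U + E)^2 + h * E^2) * ((x - y) / (2 * h))^2
     + (U^2 * (1/k + 1/h) + Up / h * (2 * E / 3 + 3 * U / 2) + Up^2 * k / h^2) * ((x^2 + y^2)/2).
Proof. intros Hh Hk Hx Hy HW1 HW2 Hd.
  pose proof (abs_avg_diff x y E Hx Hy) as HxE. pose proof (abs_avg_diff W1 W2 U HW1 HW2) as HWU.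
  set (s := (x + y)/2) in *. set (m := (W1 + W2)/2) in *.
  set (sig := Rabs s) in *. set (e := Rabs (x - y) / 2) in *. set (u := Rabs (W1 - W2) / 2) in *.
  assert (Hsig: 0 <= sig) by apply Rabs_pos. assert (He: 0 <= e) by (unfold e; pose proof (Rabs_pos (x-y)); lra).
  assert (Hu: 0 <= u) by (unfold u; pose proof (Rabs_pos (W1-W2)); lra).
  assert (Hun: u <= h * Up) by (unfold u; lra).
  pose proof (Rabs_pos m).
  assert (HM: Rabs ((W1 * x - W2 * y) + (x^2 - y^2)/2) <= 2 * ((U - u + sig) * e + sig * u)).
  { replace ((W1 * x - W2 * y) + (x^2 - y^2)/2) with ((m + s) * (x - y) + s * (W1 - W2)) by (unfold m, s; field).
    eapply Rle_trans. apply Rabs_triang. rewrite !Rabs_mult.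
    assert (T1: Rabs (m + s) <= Rabs m + sig) by apply Rabs_triang.
    assert (T2: Rabs (x - y) = 2 * e) by (unfold e; field). assert (T3: Rabs (W1 - W2) = 2 * u) by (unfold u; field).
    rewrite T2, T3. fold sig.
    assert (Rabs (m + s) * (2 * e) <= (U - u + sig) * (2 * e)) by (apply Rmult_le_compat_r; lra).
    lra. }
  assert (HF0: 0 <= (U - u + sig) * e + sig * u) by (pose proof (Rabs_pos (W1*x - W2*y + (x^2-y^2)/2)); lra).
  assert (HM2: ((W1 * x - W2 * y) + (x^2 - y^2)/2)^2 <= 4 * ((U - u + sig) * e + sig * u)^2).
  { rewrite <- pow2_abs. replace (4 * ((U - u + sig) * e + sig * u)^2) with ((2 * ((U - u + sig) * e + sig * u))^2) by ring.
    apply pow_incr. split; auto. apply Rabs_pos. }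
  pose proof (B8_core h k U E (h * Up) u sig e Hh Hk Hu Hun ltac:(lra) Hsig He ltac:(lra)) as C. cbv zeta in C.
  assert (Hxy: (x^2 + y^2)/2 = sig^2 + e^2).
  { unfold sig, e. replace ((Rabs (x - y) / 2)^2) with ((Rabs (x-y))^2/4) by field.
    rewrite !pow2_abs. unfold s. field. }
  assert (Hd2: ((x - y) / (2 * h))^2 = e^2 / h^2).
  { unfold e. replace ((Rabs (x - y) / 2)^2) with ((Rabs (x-y))^2/4) by field. rewrite pow2_abs. field. lra. }
  rewrite Hxy, Hd2.
  replace ((1 + h/2) * (((W1 * x - W2 * y) + (x^2 - y^2)/2) / (2 * h))^2)
    with ((1 + h/2) * ((W1 * x - W2 * y) + (x^2 - y^2)/2)^2 / (4 * h^2)) by (field; lra).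
  apply Rle_trans with ((1 + h/2) * (4 * ((U - u + sig) * e + sig * u)^2) / (4 * h^2)).
  { unfold Rdiv. apply Rmult_le_compat_r. left; apply Rinv_0_lt_compat; nra. apply Rmult_le_compat_l; lra. }
  replace ((1 + h/2) * (4 * ((U - u + sig) * e + sig * u)^2) / (4 * h^2)) with ((1 + h/2) * ((U - u + sig) * e + sig * u)^2 / h^2) by (field; lra).
  replace (((U + E)^2 + h * E^2) * (e^2 / h^2) + (U^2 * (1/k + 1/h) + Up / h * (2 * E / 3 + 3 * U / 2) + Up^2 * k / h^2) * (sig^2 + e^2))
    with ((((U + E) ^ 2 + h * E ^ 2) * e ^ 2 + (U ^ 2 * h ^ 2 / k + U ^ 2 * h + h * Up * (2 * E / 3 + 3 * U / 2) + (h * Up) ^ 2 * k / h ^ 2) * (sig ^ 2 + e ^ 2)) / h^2) by (field; lra).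
  unfold Rdiv. apply Rmult_le_compat_r. left; apply Rinv_0_lt_compat; nra. exact C.
Qed.

Definition NW h (a w : seqZ) : seqZ := fun j => (w (j+1)%Z * a (j+1)%Z - w (j-1)%Z * a (j-1)%Z) / (2*h).
Definition NA h (a : seqZ) : seqZ := fun j => (a (j+1)%Z ^ 2 - a (j-1)%Z ^ 2) / (4*h).
Definition wbar (w : seqZ) : seqZ := fun j => (w (j+1)%Z + w (j-1)%Z) / 2.
Definition Dw h (w : seqZ) : seqZ := fun j => (w (j+1)%Z - w (j-1)%Z) / (2*h).

Lemma l2_Dp h a : in_l2 a -> in_l2 (Dp h a).
Proof. intros. unfold Dp. apply l2_div. apply l2_minus; auto. apply l2_shift; auto. Qed.
Lemma l2_Dm h a : in_l2 a -> in_l2 (Dm h a).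
Proof. intros. unfold Dm. apply l2_div. apply l2_minus; auto. apply (l2_shift a (-1)); auto. Qed.
Lemma l2_Dc h a : in_l2 a -> in_l2 (Dc h a).
Proof. intros. unfold Dc. apply l2_div. apply l2_plus; [apply l2_Dp|apply l2_Dm]; auto. Qed.
Lemma l2_D3 h a : in_l2 a -> in_l2 (D3 h a).
Proof. intros. unfold D3. apply l2_Dp, l2_Dp, l2_Dm; auto. Qed.
Lemma bnd_Dp h a : bnd a -> bnd (Dp h a).
Proof. intros. unfold Dp. apply bnd_div. apply bnd_minus; auto. apply bnd_shift; auto. Qed.
Lemma bnd_Dm h a : bnd a -> bnd (Dm h a).
Proof. intros. unfold Dm. apply bnd_div. apply bnd_minus; auto. apply (bnd_shift a (-1)); auto. Qed.
Lemma bnd_Dc h a : bnd a -> bnd (Dc h a).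
Proof. intros. unfold Dc. apply bnd_div. apply bnd_plus; [apply bnd_Dp|apply bnd_Dm]; auto. Qed.
Lemma bnd_D3 h a : bnd a -> bnd (D3 h a).
Proof. intros. unfold D3. apply bnd_Dp, bnd_Dp, bnd_Dm; auto. Qed.

Lemma l2_bmul_r f g : bnd g -> in_l2 f -> in_l2 (fun j => f j * g j).
Proof. intros. apply (summableZ_ext (fun j => (g j * f j)^2)). intros; ring. apply l2_bmul; auto. Qed.
Lemma l2_pow2 f : bnd f -> in_l2 f -> in_l2 (fun j => f j ^ 2).
Proof. intros. apply (summableZ_ext (fun j => (f j * f j)^2)). intros; ring. apply l2_bmul; auto. Qed.
Lemma l2_pow3 f : bnd f -> in_l2 f -> in_l2 (fun j => f j ^ 3).
Proof. intros. apply (summableZ_ext (fun j => (f j ^ 2 * f j)^2)). intros; ring. apply l2_bmul; auto.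
  destruct H as [M HM]; exists (M^2); intros. rewrite <- RPow_abs. apply pow_incr. split; [apply Rabs_pos|auto]. Qed.
Lemma bnd_pow f n : bnd f -> bnd (fun j => f j ^ n).
Proof. intros [M HM]. exists (M^n). intros. rewrite <- RPow_abs. apply pow_incr. split; [apply Rabs_pos|auto]. Qed.
Lemma l2_shift' f m : in_l2 f -> in_l2 (fun j => f (j + m)%Z).
Proof. apply l2_shift. Qed.
Lemma l2_shiftm f m : in_l2 f -> in_l2 (fun j => f (j - m)%Z).
Proof. intros. apply (summableZ_ext (fun j => f (j + - m)%Z ^ 2)). intros; do 2 f_equal; lia. apply l2_shift; auto. Qed.
Lemma bnd_shiftm f m : bnd f -> bnd (fun j => f (j - m)%Z).
Proof. intros [M HM]. exists M; auto. Qed.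
Lemma l2_id f : in_l2 f -> in_l2 (fun j => f j).
Proof. auto. Qed.
Lemma bnd_id f : bnd f -> bnd (fun j => f j).
Proof. auto. Qed.


Lemma l1_bmul_r f g : bnd g -> summableZ f -> summableZ (fun j => f j * g j).
Proof. intros. apply (summableZ_ext (fun j => g j * f j)). intros; ring. apply l1_bmul; auto. Qed.
Lemma bnd_opp f : bnd f -> bnd (fun j => - f j).
Proof. intros [M HM]; exists M; intros; rewrite Rabs_Ropp; auto. Qed.

Ltac bt := lazymatch goal with
  | |- bnd (fun j => _ + _) => simple apply bnd_plus; bt
  | |- bnd (fun j => _ - _) => simple apply bnd_minus; bt
  | |- bnd (fun j => - _) => simple apply bnd_opp; bt
  | |- bnd (fun j => _ / _) => simple apply bnd_div; bt
  | |- bnd (fun j => _ * _) => simple apply bnd_mul; bt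
  | |- bnd (fun j => _ ^ _) => simple apply bnd_pow; bt
  | |- bnd (fun j => ?f (j + _)%Z) => simple apply (bnd_shift f); bt
  | |- bnd (fun j => ?f (j - _)%Z) => simple apply (bnd_shiftm f); bt
  | |- bnd (fun j => Dp _ ?a j) => simple apply bnd_Dp; bt
  | |- bnd (fun j => Dm _ ?a j) => simple apply bnd_Dm; bt
  | |- bnd (fun j => Dc _ ?a j) => simple apply bnd_Dc; bt
  | |- bnd (fun j => D3 _ ?a j) => simple apply bnd_D3; bt
  | |- bnd (Dp _ _) => simple apply bnd_Dp; bt
  | |- bnd (Dm _ _) => simple apply bnd_Dm; bt
  | |- bnd (Dc _ _) => simple apply bnd_Dc; bt
  | |- bnd (D3 _ _) => simple apply bnd_D3; bt
  | |- bnd (NA _ _) => unfold NA; bt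
  | |- bnd (NW _ _ _) => unfold NW; bt
  | |- bnd (wbar _) => unfold wbar; bt
  | |- bnd (Dw _ _) => unfold Dw; bt
  | |- bnd (fun j => NA _ _ j) => unfold NA; bt
  | |- bnd (fun j => NW _ _ _ j) => unfold NW; bt
  | |- bnd (fun j => wbar _ j) => unfold wbar; bt
  | |- bnd (fun j => Dw _ _ j) => unfold Dw; bt
  | |- bnd (fun j => ?f j) => first [assumption | simple apply l2_bnd; assumption | simple apply bnd_const]
  | |- bnd ?f => first [assumption | simple apply l2_bnd; assumption | simple apply bnd_const]
  end.

Ltac l2t := lazymatch goal with
  | |- in_l2 (fun j => _ + _) => simple apply l2_plus; l2t
  | |- in_l2 (fun j => _ - _) => simple apply l2_minus; l2t
  | |- in_l2 (fun j => - _) => simple apply l2_opp; l2t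
  | |- in_l2 (fun j => _ / _) => simple apply l2_div; l2t
  | |- in_l2 (fun j => _ * _) => first [simple apply l2_scal; l2t | simple apply l2_bmul; [bt|l2t] | simple apply l2_bmul_r; [bt|l2t]]
  | |- in_l2 (fun j => _ ^ 2) => simple apply l2_pow2; [bt|l2t]
  | |- in_l2 (fun j => _ ^ 3) => simple apply l2_pow3; [bt|l2t]
  | |- in_l2 (fun j => ?f (j + _)%Z) => simple apply (l2_shift' f); l2t
  | |- in_l2 (fun j => ?f (j - _)%Z) => simple apply (l2_shiftm f); l2t
  | |- in_l2 (fun j => Dp _ ?a j) => simple apply l2_Dp; l2t
  | |- in_l2 (fun j => Dm _ ?a j) => simple apply l2_Dm; l2t
  | |- in_l2 (fun j => Dc _ ?a j) => simple apply l2_Dc; l2t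
  | |- in_l2 (fun j => D3 _ ?a j) => simple apply l2_D3; l2t
  | |- in_l2 (Dp _ _) => simple apply l2_Dp; l2t
  | |- in_l2 (Dm _ _) => simple apply l2_Dm; l2t
  | |- in_l2 (Dc _ _) => simple apply l2_Dc; l2t
  | |- in_l2 (D3 _ _) => simple apply l2_D3; l2t
  | |- in_l2 (NA _ _) => unfold NA; l2t
  | |- in_l2 (NW _ _ _) => unfold NW; l2t
  | |- in_l2 (wbar _) => unfold wbar; l2t
  | |- in_l2 (Dw _ _) => unfold Dw; l2t
  | |- in_l2 (fun j => NA _ _ j) => unfold NA; l2t
  | |- in_l2 (fun j => NW _ _ _ j) => unfold NW; l2t
  | |- in_l2 (fun j => wbar _ j) => unfold wbar; l2t
  | |- in_l2 (fun j => Dw _ _ j) => unfold Dw; l2t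
  | |- in_l2 (fun j => ?f j) => assumption
  | |- in_l2 ?f => assumption
  end.

Ltac l1t := lazymatch goal with
  | |- summableZ (fun j => _ + _) => simple apply summableZ_plus; l1t
  | |- summableZ (fun j => _ - _) => simple apply summableZ_minus; l1t
  | |- summableZ (fun j => - _) => simple apply summableZ_opp; l1t
  | |- summableZ (fun j => _ / _) => simple apply summableZ_div; l1t
  | |- summableZ (fun j => _ ^ 2) => simple apply l1_sq; l2t
  | |- summableZ (fun j => _ ^ 3) => simple apply l1_bnd3; [bt|l2t]
  | |- summableZ (fun j => _ * _) => first [simple apply summableZ_scal; l1t | simple apply l1_mul; [l2t|l2t]
                                            | simple apply l1_bmul; [bt|l1t] | simple apply l1_bmul_r; [bt|l1t]]
  end.


Ltac unf := cbv beta; unfold D3, Dc, NW, NA, wbar, Dw, Dp, Dm; znorm.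

Lemma S_aq h a : 0 < h -> in_l2 a -> sumZ (fun j => a j * Dp h (Dm h a) j) = sumZ (fun j => - (Dp h a j)^2).
Proof. intros. apply (sumZ_eq_tele _ _ (fun i : Z => ((-1) * (a (i - 1)%Z) * (a i)) / ((h ^ 2)) + ((a i ^ 2)) / ((h ^ 2)))); [l1t|l1t|l1t|]. intros j. unf. field. lra. Qed.

Lemma S_as3 h a : 0 < h -> in_l2 a -> sumZ (fun j => a j * D3 h a j) = sumZ (fun j => h / 2 * (Dp h (Dm h a) j)^2).
Proof. intros. apply (sumZ_eq_tele _ _ (fun i : Z => ((-1) * (a (i - 1)%Z) * (a i)) / ((h ^ 3)) + ((a (i - 1)%Z) * (a (i + 1)%Z)) / ((h ^ 3)) + ((a (i - 1)%Z ^ 2)) / (2 * (h ^ 3)) + ((-1) * (a i ^ 2)) / (2 * (h ^ 3)))); [l1t|l1t|l1t|]. intros j. unf. field. lra. Qed.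

Lemma S_s3q h a : 0 < h -> in_l2 a -> sumZ (fun j => D3 h a j * Dp h (Dm h a) j) = sumZ (fun j => - (h / 2) * (D3 h a j)^2).
Proof. intros. apply (sumZ_eq_tele _ _ (fun i : Z => ((-2) * (a (i - 1)%Z) * (a i)) / ((h ^ 5)) + ((a (i - 1)%Z) * (a (i + 1)%Z)) / ((h ^ 5)) + ((a (i - 1)%Z ^ 2)) / (2 * (h ^ 5)) + ((-2) * (a i) * (a (i + 1)%Z)) / ((h ^ 5)) + ((2) * (a i ^ 2)) / ((h ^ 5)) + ((a (i + 1)%Z ^ 2)) / (2 * (h ^ 5)))); [l1t|l1t|l1t|]. intros j. unf. field. lra. Qed.

Lemma S_F2 h a : 0 < h -> in_l2 a -> sumZ (fun j => (D3 h a j)^2) = sumZ (fun j => 4 / h^2 * ((Dp h (Dm h a) j)^2 - (Dp h (Dc h a) j)^2)).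
Proof. intros. apply (sumZ_eq_tele _ _ (fun i : Z => ((-8) * (a (i - 1)%Z) * (a i)) / ((h ^ 6)) + ((4) * (a (i - 1)%Z) * (a (i + 1)%Z)) / ((h ^ 6)) + ((2) * (a (i - 1)%Z ^ 2)) / ((h ^ 6)) + ((-8) * (a i) * (a (i + 1)%Z)) / ((h ^ 6)) + ((8) * (a i ^ 2)) / ((h ^ 6)) + ((2) * (a (i + 1)%Z ^ 2)) / ((h ^ 6)))); [l1t|l1t|l1t|]. intros j. unf. field. lra. Qed.

Lemma S_F3 h a : 0 < h -> in_l2 a -> sumZ (fun j => (Dp h a j)^2 - (Dc h a j)^2) = sumZ (fun j => h^2 / 4 * (Dp h (Dm h a) j)^2).
Proof. intros. apply (sumZ_eq_tele _ _ (fun i : Z => ((-1) * (a (i - 1)%Z) * (a i)) / ((h ^ 2)) + ((a (i - 1)%Z ^ 2)) / (2 * (h ^ 2)) + ((a i ^ 2)) / (2 * (h ^ 2)))); [l1t|l1t|l1t|]. intros j. unf. field. lra. Qed.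

Lemma S_G1 h a : 0 < h -> in_l2 a -> sumZ (fun j => a j * NA h a j) = sumZ (fun j => - (h^2 / 12) * (Dp h a j)^3).
Proof. intros. apply (sumZ_eq_tele _ _ (fun i : Z => ((a (i - 1)%Z ^ 2) * (a i)) / (4 * (h)) + ((a i ^ 3)) / (12 * (h)))); [l1t|l1t|l1t|]. intros j. unf. field. lra. Qed.

Lemma S_G3 h a : 0 < h -> in_l2 a -> sumZ (fun j => Dp h (Dm h a) j * NA h a j) = sumZ (fun j => - (2/3) * (Dc h a j)^3 + 1/6 * (Dp h a j)^3).
Proof. intros. apply (sumZ_eq_tele _ _ (fun i : Z => ((-1) * (a (i - 1)%Z ^ 2) * (a i)) / (2 * (h ^ 3)) + ((a (i - 1)%Z ^ 3)) / (3 * (h ^ 3)) + ((a i ^ 3)) / (6 * (h ^ 3)))); [l1t|l1t|l1t|]. intros j. unf. field. lra. Qed.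

Ltac pwfin P := match type of P with ?X <= ?Y => match goal with |- ?L <= ?R =>
  let H := fresh in assert (H : L - R = X - Y) by (unfold D3, Dc, NW, NA, wbar, Dw, Dp, Dm; znorm; field; lra); lra end end.
Lemma dp_abs h w Up j : 0 < h -> Rabs (Dp h w j) <= Up -> Rabs (w (j+1)%Z - w j) <= h * Up.
Proof. intros Hh H. unfold Dp in H. rewrite Rabs_div in H by lra. rewrite (Rabs_right h) in H by lra.
  apply Rmult_le_reg_r with (/h). apply Rinv_0_lt_compat; lra. replace (h * Up * / h) with Up by (field; lra). auto. Qed.
Lemma dm_abs h w Um j : 0 < h -> Rabs (Dm h w j) <= Um -> Rabs (w j - w (j-1)%Z) <= h * Um.
Proof. intros Hh H. unfold Dm in H. rewrite Rabs_div in H by lra. rewrite (Rabs_right h) in H by lra.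
  apply Rmult_le_reg_r with (/h). apply Rinv_0_lt_compat; lra. replace (h * Um * / h) with Um by (field; lra). auto. Qed.
Ltac ab H := let X := fresh in pose proof (abs_le_iff _ _ H) as X.

Lemma S_G2 h Up a w : 0 < h -> in_l2 a -> bnd w -> (forall j, Rabs (Dp h w j) <= Up) -> sumZ (fun j => -2 * a j * NW h a w j) <= sumZ (fun j => Up * a j ^ 2).
Proof. intros Hh Ha Hw HUp. apply (sumZ_le_tele _ _ (fun i : Z => ((Up) * (a i ^ 2)) / (2) + ((-1) * (a (i - 1)%Z) * (a i) * (w (i - 1)%Z)) / ((h)))); [l1t|l1t|l1t|]. intros j.
  pose proof (PW_G2 h Up (a j) (a (j+1)%Z) (w j) (w (j+1)%Z) Hh (dp_abs h w Up j Hh (HUp j))) as P. unf. pwfin P.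
Qed.

Lemma S_G5 h Up a w : 0 < h -> in_l2 a -> bnd w -> (forall j, Rabs (Dp h w j) <= Up) -> sumZ (fun j => - Dp h (Dm h a) j * NW h a w j) <= sumZ (fun j => 2 * Up / h^2 * a j ^ 2).
Proof. intros Hh Ha Hw HUp. apply (sumZ_le_tele _ _ (fun i : Z => ((Up) * (a i ^ 2)) / ((h ^ 2)) + ((Up) * (a (i + 1)%Z ^ 2)) / (2 * (h ^ 2)) + ((a (i - 1)%Z) * (a i) * (w (i - 1)%Z)) / ((h ^ 3)) + ((-1) * (a (i - 1)%Z) * (a (i + 1)%Z) * (w (i - 1)%Z)) / (2 * (h ^ 3)) + ((a (i - 1)%Z) * (a (i + 1)%Z) * (w (i + 1)%Z)) / (2 * (h ^ 3)) + ((-1) * (a (i - 1)%Z ^ 2) * (w (i - 1)%Z)) / (2 * (h ^ 3)) + ((-1) * (a i ^ 2) * (w i)) / (2 * (h ^ 3)))); [l1t|l1t|l1t|]. intros j.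
  assert (B1 := dp_abs h w Up j Hh (HUp j)). assert (B2 := dp_abs h w Up (j+1)%Z Hh (HUp (j+1)%Z)).
  assert (B3: Rabs (w (j+2)%Z - w j) <= 2 * h * Up). { ab B1; ab B2. apply Rabs_le_between. replace (j+1+1)%Z with (j+2)%Z in * by lia. lra. }
  pose proof (PW_G5 h Up (a j) (a (j+1)%Z) (a (j+2)%Z) (w j) (w (j+1)%Z) (w (j+2)%Z) Hh B1 B3) as P. unf. pwfin P.
Qed.

Lemma S_H1 h U Up Um a w : 0 < h -> in_l2 a -> bnd w -> (forall j, Rabs (w j) <= U) -> (forall j, Rabs (Dp h w j) <= Up) -> (forall j, Rabs (Dm h w j) <= Um) -> sumZ (fun j => 2 * D3 h a j * wbar w j * Dc h a j) <= sumZ (fun j => 2 * U * (Dp h (Dc h a) j)^2 + (h * Um / 2 + Up) * (Dp h (Dm h a) j)^2 + Up * (Dp h a j)^2).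
Proof. intros Hh Ha Hw HU HUp HUm. apply (sumZ_le_tele _ _ (fun i : Z => ((-1) * (U) * (a (i - 1)%Z) * (a i)) / ((h ^ 4)) + ((U) * (a (i - 1)%Z) * (a (i + 1)%Z)) / ((h ^ 4)) + ((-1) * (U) * (a (i - 1)%Z ^ 2)) / (2 * (h ^ 4)) + ((U) * (a (i - 2)%Z) * (a (i - 1)%Z)) / ((h ^ 4)) + ((U) * (a (i - 2)%Z) * (a i)) / ((h ^ 4)) + ((-1) * (U) * (a (i - 2)%Z) * (a (i + 1)%Z)) / ((h ^ 4)) + ((-1) * (U) * (a (i - 2)%Z ^ 2)) / (2 * (h ^ 4)) + ((U) * (a i) * (a (i + 1)%Z)) / ((h ^ 4)) + ((-1) * (U) * (a i ^ 2)) / (2 * (h ^ 4)) + ((-1) * (U) * (a (i + 1)%Z ^ 2)) / (2 * (h ^ 4)) + ((2) * (Up) * (a (i - 1)%Z) * (a i)) / ((h ^ 2)) + ((-3) * (Up) * (a (i - 1)%Z ^ 2)) / (2 * (h ^ 2)) + ((Up) * (a (i - 2)%Z) * (a (i - 1)%Z)) / ((h ^ 2)) + ((-1) * (Up) * (a (i - 2)%Z ^ 2)) / (2 * (h ^ 2)) + ((-1) * (Up) * (a i ^ 2)) / ((h ^ 2)) + ((a (i - 1)%Z) * (a i) * (w (i - 1)%Z)) / ((h ^ 4)) + ((a (i - 1)%Z) * (a i) * (w (i - 2)%Z)) / (2 * (h ^ 4)) + ((a (i - 1)%Z) * (a i) * (w i)) / (2 * (h ^ 4)) + ((a (i - 1)%Z)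 * (a i) * (w (i + 1)%Z)) / ((h ^ 4)) + ((-1) * (a (i - 1)%Z ^ 2) * (w (i - 1)%Z)) / ((h ^ 4)) + ((-1) * (a (i - 1)%Z ^ 2) * (w (i + 1)%Z)) / ((h ^ 4)) + ((a (i - 2)%Z) * (a (i - 1)%Z) * (w (i - 1)%Z)) / ((h ^ 4)) + ((-1) * (a (i - 2)%Z) * (a (i - 1)%Z) * (w (i - 2)%Z)) / (2 * (h ^ 4)) + ((-1) * (a (i - 2)%Z) * (a (i - 1)%Z) * (w i)) / (2 * (h ^ 4)) + ((a (i - 2)%Z) * (a (i - 1)%Z) * (w (i + 1)%Z)) / ((h ^ 4)) + ((-1) * (a (i - 2)%Z) * (a i) * (w (i - 1)%Z)) / (2 * (h ^ 4)) + ((a (i - 2)%Z) * (a i) * (w (i - 2)%Z)) / ((h ^ 4)) + ((a (i - 2)%Z) * (a i) * (w i)) / ((h ^ 4)) + ((-1) * (a (i - 2)%Z) * (a i) * (w (i + 1)%Z)) / (2 * (h ^ 4)) + ((-1) * (a (i - 2)%Z) * (a (i + 1)%Z) * (w (i - 2)%Z)) / (2 * (h ^ 4)) + ((-1) * (a (i - 2)%Z) * (a (i + 1)%Z) * (w i)) / (2 * (h ^ 4)) + ((-1) * (a (i - 2)%Z ^ 2) * (w (i - 1)%Z)) / (4 * (h ^ 4)) + ((-1) * (a (i - 2)%Z ^ 2) * (w (i + 1)%Z)) / (4 * (h ^ 4)) + ((a i) * (a (i + 1)%Z) * (w (i - 2)%Z)) / (2 * (h ^ 4)) + ((a i) * (a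 (i + 1)%Z) * (w i)) / (2 * (h ^ 4)) + ((-1) * (a i ^ 2) * (w (i - 1)%Z)) / (4 * (h ^ 4)) + ((-1) * (a i ^ 2) * (w (i - 2)%Z)) / ((h ^ 4)) + ((-1) * (a i ^ 2) * (w i)) / ((h ^ 4)) + ((-1) * (a i ^ 2) * (w (i + 1)%Z)) / (4 * (h ^ 4)))); [l1t|l1t|l1t|]. intros j.
  assert (A1 := HU (j+1)%Z). assert (A2 := HU (j-1)%Z).
  assert (B1 := dm_abs h w Um (j+2)%Z Hh (HUm (j+2)%Z)). assert (B2 := dm_abs h w Um j Hh (HUm j)).
  assert (C1 := dp_abs h w Up j Hh (HUp j)). assert (C2 := dp_abs h w Up (j-2)%Z Hh (HUp (j-2)%Z)).
  replace (j+2-1)%Z with (j+1)%Z in B1 by lia. replace (j-2+1)%Z with (j-1)%Z in C2 by lia.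
  assert (Q1: Rabs ((w (j+1)%Z + w (j-1)%Z)/2) <= U) by (ab A1; ab A2; apply Rabs_le_between; lra).
  assert (Q2: Rabs ((w (j+2)%Z + w j)/2 - (w (j+1)%Z + w (j-1)%Z)/2) <= h * Um) by (ab B1; ab B2; apply Rabs_le_between; lra).
  assert (Q3: Rabs ((w (j+1)%Z + w (j-1)%Z)/2 - (w j + w (j-2)%Z)/2) <= h * Up) by (ab C1; ab C2; apply Rabs_le_between; lra).
  pose proof (PW_H1 h U Up Um ((a j - 2 * a (j-1)%Z + a (j-2)%Z)/h^2) ((a (j+1)%Z - 2 * a j + a (j-1)%Z)/h^2)
    ((w j + w (j-2)%Z)/2) ((w (j+1)%Z + w (j-1)%Z)/2) ((w (j+2)%Z + w j)/2) ((a j - a (j-1)%Z)/h) ((a (j-1)%Z - a (j-2)%Z)/h) Hh Q1 Q2 Q3) as P.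
  unf. pwfin P.
Qed.

Lemma S_H2 h k Up a w : 0 < h -> 0 < k -> in_l2 a -> bnd w -> (forall j, Rabs (Dp h w j) <= Up) -> sumZ (fun j => 2 * D3 h a j * wbar a j * Dw h w j) <= sumZ (fun j => k * Up * (D3 h a j)^2 + Up / k * a j ^ 2).
Proof. intros Hh Hk Ha Hw HUp. apply (sumZ_le_tele _ _ (fun i : Z => ((-1) * (Up) * (a (i - 1)%Z ^ 2)) / (2 * (k)) + ((Up) * (a i ^ 2)) / (2 * (k)))); [l1t|l1t|l1t|]. intros j.
  assert (C1 := dp_abs h w Up j Hh (HUp j)). assert (C2 := dp_abs h w Up (j-1)%Z Hh (HUp (j-1)%Z)).
  replace (j-1+1)%Z with j in C2 by lia.
  assert (Q1: Rabs ((w (j+1)%Z - w (j-1)%Z) / (2 * h)) <= Up).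
  { ab C1; ab C2. apply Rabs_le_between. split; [apply Rmult_le_reg_l with (2*h)|apply Rmult_le_reg_l with (2*h)]; try lra;
    replace (2 * h * ((w (j + 1)%Z - w (j - 1)%Z) / (2 * h))) with (w (j + 1)%Z - w (j - 1)%Z) by (field; lra); lra. }
  pose proof (PW_H2 k Up (D3 h a j) (a (j+1)%Z) (a (j-1)%Z) ((w (j+1)%Z - w (j-1)%Z) / (2 * h)) Hk Q1) as P.
  unf. pwfin P.
Qed.

Lemma S_H3 h E a : 0 < h -> in_l2 a -> (forall j, Rabs (a j) <= E) -> sumZ (fun j => 2 * D3 h a j * wbar a j * Dc h a j) <= sumZ (fun j => 2 * E * (Dp h (Dc h a) j)^2 + 7 * E * (Dp h (Dm h a) j)^2).
Proof. intros Hh Ha HE. apply (sumZ_le_tele _ _ (fun i : Z => ((29) * (E) * (a (i - 1)%Z) * (a i)) / (3 * (h ^ 4)) + ((E) * (a (i - 1)%Z) * (a (i + 1)%Z)) / ((h ^ 4)) + ((-67) * (E) * (a (i - 1)%Z ^ 2)) / (6 * (h ^ 4)) + ((35) * (E) * (a (i - 2)%Z) * (a (i - 1)%Z)) / (3 * (h ^ 4)) + ((-13) * (E) * (a (i - 2)%Z) * (a i)) / (3 * (h ^ 4)) + ((-1) * (E) * (a (i - 2)%Z) * (a (i + 1)%Z)) / ((h ^ 4)) + ((-19) * (E) * (a (i - 2)%Z ^ 2)) / (6 * (h ^ 4)) + ((E) * (a i) * (a (i + 1)%Z)) / ((h ^ 4)) + ((-19) * (E) * (a i ^ 2)) / (6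 * (h ^ 4)) + ((-1) * (E) * (a (i + 1)%Z ^ 2)) / (2 * (h ^ 4)) + ((a (i - 1)%Z) * (a i) * (a (i + 1)%Z)) / ((h ^ 4)) + ((a (i - 1)%Z) * (a i ^ 2)) / (4 * (h ^ 4)) + ((a (i - 1)%Z ^ 2) * (a i)) / ((h ^ 4)) + ((-1) * (a (i - 1)%Z ^ 2) * (a (i + 1)%Z)) / ((h ^ 4)) + ((-1) * (a (i - 1)%Z ^ 3)) / (3 * (h ^ 4)) + ((-1) * (a (i - 2)%Z) * (a (i - 1)%Z) * (a i)) / (2 * (h ^ 4)) + ((a (i - 2)%Z) * (a (i - 1)%Z) * (a (i + 1)%Z)) / ((h ^ 4)) + ((-1) * (a (i - 2)%Z) * (a (i - 1)%Z ^ 2)) / ((h ^ 4)) + ((-1) * (a (i - 2)%Z) * (a i) * (a (i + 1)%Z)) / (2 * (h ^ 4)) + ((a (i - 2)%Z) * (a i ^ 2)) / (2 * (h ^ 4)) + ((5) * (a (i - 2)%Z ^ 2) * (a (i - 1)%Z)) / (4 * (h ^ 4)) + ((a (i - 2)%Z ^ 2) * (a i)) / (2 * (h ^ 4)) + ((-3) * (a (i - 2)%Z ^ 2) * (a (i + 1)%Z)) / (4 * (h ^ 4)) + ((-1) * (a (i - 2)%Z ^ 3)) / (2 * (h ^ 4)) + ((a i ^ 2) * (a (i + 1)%Z)) / (4 * (h ^ 4)) + ((-7) * (a i ^ 3)) / (6 * (h ^ 4)))); [l1t|l1t|l1t|]. intros j.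
  pose proof (PW_H3 h E (a (j-2)%Z) (a (j-1)%Z) (a j) (a (j+1)%Z) (a (j+2)%Z) Hh (HE _) (HE _) (HE _) (HE _) (HE _)) as P.
  cbv zeta in P. unf. pwfin P.
Qed.

Lemma S_I3 h c a e : 0 < h -> in_l2 a -> in_l2 e -> sumZ (fun j => - c * h * Dp h (Dm h a) j * e j) <= sumZ (fun j => 2 / h * (c^2 * a j ^ 2 + e j ^ 2)).
Proof. intros Hh Ha He. apply (sumZ_le_tele _ _ (fun i : Z => ((-1) * (a (i - 1)%Z ^ 2) * (c ^ 2)) / (2 * (h)) + ((a i ^ 2) * (c ^ 2)) / (2 * (h)))); [l1t|l1t|l1t|]. intros j.
  pose proof (PW_I3 h c (a (j-1)%Z) (a j) (a (j+1)%Z) (e j) Hh) as P. unf. pwfin P.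
Qed.

Lemma S_B8 h k U E Up a w : 0 < h -> 0 < k -> in_l2 a -> bnd w -> (forall j, Rabs (a j) <= E) -> (forall j, Rabs (w j) <= U) -> (forall j, Rabs (Dp h w j) <= Up) -> sumZ (fun j => (1 + h/2) * (NW h a w j + NA h a j)^2) <= sumZ (fun j => ((U + E)^2 + h * E^2) * (Dc h a j)^2 + (U^2 * (1/k + 1/h) + Up / h * (2 * E / 3 + 3 * U / 2) + Up^2 * k / h^2) * a j ^ 2).
Proof. intros Hh Hk Ha Hw HE HU HUp. apply (sumZ_le_tele _ _ (fun i : Z => ((-1) * ((U^2 * (1/k + 1/h) + Up / h * (2 * E / 3 + 3 * U / 2) + Up^2 * k / h^2)) * (a (i - 1)%Z ^ 2)) / (2) + (((U^2 * (1/k + 1/h) + Up / h * (2 * E / 3 + 3 * U / 2) + Up^2 * k / h^2)) * (a i ^ 2)) / (2))); [l1t|l1t|l1t|]. intros j.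
  assert (C1 := dp_abs h w Up j Hh (HUp j)). assert (C2 := dp_abs h w Up (j-1)%Z Hh (HUp (j-1)%Z)).
  replace (j-1+1)%Z with j in C2 by lia.
  assert (Q1: Rabs (w (j+1)%Z - w (j-1)%Z) <= 2 * h * Up) by (ab C1; ab C2; apply Rabs_le_between; lra).
  pose proof (PW_B8 h k U E Up (a (j+1)%Z) (a (j-1)%Z) (w (j+1)%Z) (w (j-1)%Z) Hh Hk (HE _) (HE _) (HU _) (HU _) Q1) as P.
  unf. pwfin P.
Qed.

Lemma Ndec h a w j : 0 < h -> NW h a w j + NA h a j = wbar w j * Dc h a j + wbar a j * Dw h w j + wbar a j * Dc h a j.
Proof. intros. unfold NW, NA, wbar, Dw, Dc, Dp, Dm. znorm. field. lra. Qed.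

Lemma expand_Phi h k c th a w e : 0 < h -> in_l2 a -> bnd w -> in_l2 e ->
  sumZ (fun j => (a j - k * (NW h a w j + NA h a j) - (1 - th) * k * D3 h a j + c * h * k / 2 * Dp h (Dm h a) j - k * e j) ^ 2) = sumZ (fun j => (a j - (1 - th) * k * D3 h a j) ^ 2) + (c^2*h^2*k^2/4) * sumZ (fun j => (Dp h (Dm h a) j)^2) + (k^2) * sumZ (fun j => (NW h a w j + NA h a j + e j)^2) + (c*h*k) * sumZ (fun j => a j * Dp h (Dm h a) j) + (- ((1 - th)*c*h*k^2)) * sumZ (fun j => D3 h a j * Dp h (Dm h a) j) + (k) * sumZ (fun j => -2 * a j * NW h a w j) + (- (2*k)) * sumZ (fun j => a j * NA h a j) + ((1 - th)*k^2) * sumZ (fun j => 2 * D3 h a j * wbar w j * Dc h a j) + ((1 - th)*k^2) * sumZ (fun j => 2 * D3 h a j * wbar a j * Dw h w j) + ((1 - th)*k^2) * sumZ (fun j => 2 * D3 h a j * wbar a j * Dc h a j) + (k) * sumZ (fun j => -2 * (a j - (1 - th) * k * D3 h a j) * e j) + (c*h*k^2) * sumZ (fun j => - Dp h (Dm h a) j * NW h a w j) + (- (c*h*k^2)) * sumZ (fun j => Dp h (Dm h a) j * NA h a j) + (k^2) * sumZ (fun j => - c * h * Dp h (Dm h a) j * e j).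
Proof.
  intros Hh Ha Hw He.
  transitivity (sumZ (fun j => (a j - (1 - th) * k * D3 h a j) ^ 2 + (c^2*h^2*k^2/4) * ((Dp h (Dm h a) j)^2) + (k^2) * ((NW h a w j + NA h a j + e j)^2) + (c*h*k) * (a j * Dp h (Dm h a) j) + (- ((1 - th)*c*h*k^2)) * (D3 h a j * Dp h (Dm h a) j) + (k) * (-2 * a j * NW h a w j) + (- (2*k)) * (a j * NA h a j) + ((1 - th)*k^2) * (2 * D3 h a j * wbar w j * Dc h a j) + ((1 - th)*k^2) * (2 * D3 h a j * wbar a j * Dw h w j) + ((1 - th)*k^2) * (2 * D3 h a j * wbar a j * Dc h a j) + (k) * (-2 * (a j - (1 - th) * k * D3 h a j) * e j) + (c*h*k^2) * (- Dp h (Dm h a) j * NW h a w j) + (- (c*h*k^2)) * (Dp h (Dm h a) j * NA h a j) + (k^2) * (- c * h * Dp h (Dm h a) j * e j))).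
  { apply sumZ_ext. intros j. pose proof (Ndec h a w j Hh) as Nd.
       remember (NW h a w j) as nw. remember (NA h a j) as na. remember (wbar w j) as wbw. remember (wbar a j) as wba.
       remember (Dc h a j) as dc. remember (Dw h w j) as dw.
       assert (Nd': nw = wbw * dc + wba * dw + wba * dc - na) by lra. rewrite Nd'. field. }
  assert (LS0: summableZ (fun j => (a j - (1 - th) * k * D3 h a j) ^ 2)) by l1t.
  assert (LS1: summableZ (fun j => (c^2*h^2*k^2/4) * ((Dp h (Dm h a) j)^2))) by l1t.
  assert (LS2: summableZ (fun j => (k^2) * ((NW h a w j + NA h a j + e j)^2))) by l1t.
  assert (LS3: summableZ (fun j => (c*h*k) * (a j * Dp h (Dm h a) j))) by l1t.
  assert (LS4: summableZ (fun j => (- ((1 - th)*c*h*k^2)) * (D3 h a j * Dp h (Dm h a) j))) by l1t.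
  assert (LS5: summableZ (fun j => (k) * (-2 * a j * NW h a w j))) by l1t.
  assert (LS6: summableZ (fun j => (- (2*k)) * (a j * NA h a j))) by l1t.
  assert (LS7: summableZ (fun j => ((1 - th)*k^2) * (2 * D3 h a j * wbar w j * Dc h a j))) by l1t.
  assert (LS8: summableZ (fun j => ((1 - th)*k^2) * (2 * D3 h a j * wbar a j * Dw h w j))) by l1t.
  assert (LS9: summableZ (fun j => ((1 - th)*k^2) * (2 * D3 h a j * wbar a j * Dc h a j))) by l1t.
  assert (LS10: summableZ (fun j => (k) * (-2 * (a j - (1 - th) * k * D3 h a j) * e j))) by l1t.
  assert (LS11: summableZ (fun j => (c*h*k^2) * (- Dp h (Dm h a) j * NW h a w j))) by l1t.
  assert (LS12: summableZ (fun j => (- (c*h*k^2)) * (Dp h (Dm h a) j * NA h a j))) by l1t.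
  assert (LS13: summableZ (fun j => (k^2) * (- c * h * Dp h (Dm h a) j * e j))) by l1t.
  rewrite (sumZ_plus (fun j => (a j - (1 - th) * k * D3 h a j) ^ 2 + (c^2*h^2*k^2/4) * ((Dp h (Dm h a) j)^2) + (k^2) * ((NW h a w j + NA h a j + e j)^2) + (c*h*k) * (a j * Dp h (Dm h a) j) + (- ((1 - th)*c*h*k^2)) * (D3 h a j * Dp h (Dm h a) j) + (k) * (-2 * a j * NW h a w j) + (- (2*k)) * (a j * NA h a j) + ((1 - th)*k^2) * (2 * D3 h a j * wbar w j * Dc h a j) + ((1 - th)*k^2) * (2 * D3 h a j * wbar a j * Dw h w j) + ((1 - th)*k^2) * (2 * D3 h a j * wbar a j * Dc h a j) + (k) * (-2 * (a j - (1 - th) * k * D3 h a j) * e j) + (c*h*k^2) * (- Dp h (Dm h a) j * NW h a w j) + (- (c*h*k^2)) * (Dp h (Dm h a) j * NA h a j)) (fun j => (k^2) * (- c * h * Dp h (Dm h a) j * e j))) by (repeat simple apply summableZ_plus; assumption).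
  rewrite (sumZ_plus (fun j => (a j - (1 - th) * k * D3 h a j) ^ 2 + (c^2*h^2*k^2/4) * ((Dp h (Dm h a) j)^2) + (k^2) * ((NW h a w j + NA h a j + e j)^2) + (c*h*k) * (a j * Dp h (Dm h a) j) + (- ((1 - th)*c*h*k^2)) * (D3 h a j * Dp h (Dm h a) j) + (k) * (-2 * a j * NW h a w j) + (- (2*k)) * (a j * NA h a j) + ((1 - th)*k^2) * (2 * D3 h a j * wbar w j * Dc h a j) + ((1 - th)*k^2) * (2 * D3 h a j * wbar a j * Dw h w j) + ((1 - th)*k^2) * (2 * D3 h a j * wbar a j * Dc h a j) + (k) * (-2 * (a j - (1 - th) * k * D3 h a j) * e j) + (c*h*k^2) * (- Dp h (Dm h a) j * NW h a w j)) (fun j => (- (c*h*k^2)) * (Dp h (Dm h a) j * NA h a j))) by (repeat simple apply summableZ_plus; assumption).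
  rewrite (sumZ_plus (fun j => (a j - (1 - th) * k * D3 h a j) ^ 2 + (c^2*h^2*k^2/4) * ((Dp h (Dm h a) j)^2) + (k^2) * ((NW h a w j + NA h a j + e j)^2) + (c*h*k) * (a j * Dp h (Dm h a) j) + (- ((1 - th)*c*h*k^2)) * (D3 h a j * Dp h (Dm h a) j) + (k) * (-2 * a j * NW h a w j) + (- (2*k)) * (a j * NA h a j) + ((1 - th)*k^2) * (2 * D3 h a j * wbar w j * Dc h a j) + ((1 - th)*k^2) * (2 * D3 h a j * wbar a j * Dw h w j) + ((1 - th)*k^2) * (2 * D3 h a j * wbar a j * Dc h a j) + (k) * (-2 * (a j - (1 - th) * k * D3 h a j) * e j)) (fun j => (c*h*k^2) * (- Dp h (Dm h a) j * NW h a w j))) by (repeat simple apply summableZ_plus; assumption).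
  rewrite (sumZ_plus (fun j => (a j - (1 - th) * k * D3 h a j) ^ 2 + (c^2*h^2*k^2/4) * ((Dp h (Dm h a) j)^2) + (k^2) * ((NW h a w j + NA h a j + e j)^2) + (c*h*k) * (a j * Dp h (Dm h a) j) + (- ((1 - th)*c*h*k^2)) * (D3 h a j * Dp h (Dm h a) j) + (k) * (-2 * a j * NW h a w j) + (- (2*k)) * (a j * NA h a j) + ((1 - th)*k^2) * (2 * D3 h a j * wbar w j * Dc h a j) + ((1 - th)*k^2) * (2 * D3 h a j * wbar a j * Dw h w j) + ((1 - th)*k^2) * (2 * D3 h a j * wbar a j * Dc h a j)) (fun j => (k) * (-2 * (a j - (1 - th) * k * D3 h a j) * e j))) by (repeat simple apply summableZ_plus; assumption).
  rewrite (sumZ_plus (fun j => (a j - (1 - th) * k * D3 h a j) ^ 2 + (c^2*h^2*k^2/4) * ((Dp h (Dm h a) j)^2) + (k^2) * ((NW h a w j + NA h a j + e j)^2) + (c*h*k) * (a j * Dp h (Dm h a) j) + (- ((1 - th)*c*h*k^2)) * (D3 h a j * Dp h (Dm h a) j) + (k) * (-2 * a j * NW h a w j) + (- (2*k)) * (a j * NA h a j) + ((1 - th)*k^2) * (2 * D3 h a j * wbar w j * Dc h a j) + ((1 - th)*k^2) * (2 * D3 h a j * wbar a j * Dw h w j)) (fun j => ((1 - th)*k^2) * (2 * D3 h a j * wbar a j * Dc h a j))) by (repeat simple apply summableZ_plus; assumption).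
  rewrite (sumZ_plus (fun j => (a j - (1 - th) * k * D3 h a j) ^ 2 + (c^2*h^2*k^2/4) * ((Dp h (Dm h a) j)^2) + (k^2) * ((NW h a w j + NA h a j + e j)^2) + (c*h*k) * (a j * Dp h (Dm h a) j) + (- ((1 - th)*c*h*k^2)) * (D3 h a j * Dp h (Dm h a) j) + (k) * (-2 * a j * NW h a w j) + (- (2*k)) * (a j * NA h a j) + ((1 - th)*k^2) * (2 * D3 h a j * wbar w j * Dc h a j)) (fun j => ((1 - th)*k^2) * (2 * D3 h a j * wbar a j * Dw h w j))) by (repeat simple apply summableZ_plus; assumption).
  rewrite (sumZ_plus (fun j => (a j - (1 - th) * k * D3 h a j) ^ 2 + (c^2*h^2*k^2/4) * ((Dp h (Dm h a) j)^2) + (k^2) * ((NW h a w j + NA h a j + e j)^2) + (c*h*k) * (a j * Dp h (Dm h a) j) + (- ((1 - th)*c*h*k^2)) * (D3 h a j * Dp h (Dm h a) j) + (k) * (-2 * a j * NW h a w j) + (- (2*k)) * (a j * NA h a j)) (fun j => ((1 - th)*k^2) * (2 * D3 h a j * wbar w j * Dc h a j))) by (repeat simple apply summableZ_plus; assumption).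
  rewrite (sumZ_plus (fun j => (a j - (1 - th) * k * D3 h a j) ^ 2 + (c^2*h^2*k^2/4) * ((Dp h (Dm h a) j)^2) + (k^2) * ((NW h a w j + NA h a j + e j)^2) + (c*h*k) * (a j * Dp h (Dm h a) j) + (- ((1 - th)*c*h*k^2)) * (D3 h a j * Dp h (Dm h a) j) + (k) * (-2 * a j * NW h a w j)) (fun j => (- (2*k)) * (a j * NA h a j))) by (repeat simple apply summableZ_plus; assumption).
  rewrite (sumZ_plus (fun j => (a j - (1 - th) * k * D3 h a j) ^ 2 + (c^2*h^2*k^2/4) * ((Dp h (Dm h a) j)^2) + (k^2) * ((NW h a w j + NA h a j + e j)^2) + (c*h*k) * (a j * Dp h (Dm h a) j) + (- ((1 - th)*c*h*k^2)) * (D3 h a j * Dp h (Dm h a) j)) (fun j => (k) * (-2 * a j * NW h a w j))) by (repeat simple apply summableZ_plus; assumption).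
  rewrite (sumZ_plus (fun j => (a j - (1 - th) * k * D3 h a j) ^ 2 + (c^2*h^2*k^2/4) * ((Dp h (Dm h a) j)^2) + (k^2) * ((NW h a w j + NA h a j + e j)^2) + (c*h*k) * (a j * Dp h (Dm h a) j)) (fun j => (- ((1 - th)*c*h*k^2)) * (D3 h a j * Dp h (Dm h a) j))) by (repeat simple apply summableZ_plus; assumption).
  rewrite (sumZ_plus (fun j => (a j - (1 - th) * k * D3 h a j) ^ 2 + (c^2*h^2*k^2/4) * ((Dp h (Dm h a) j)^2) + (k^2) * ((NW h a w j + NA h a j + e j)^2)) (fun j => (c*h*k) * (a j * Dp h (Dm h a) j))) by (repeat simple apply summableZ_plus; assumption).
  rewrite (sumZ_plus (fun j => (a j - (1 - th) * k * D3 h a j) ^ 2 + (c^2*h^2*k^2/4) * ((Dp h (Dm h a) j)^2)) (fun j => (k^2) * ((NW h a w j + NA h a j + e j)^2))) by (repeat simple apply summableZ_plus; assumption).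
  rewrite (sumZ_plus (fun j => (a j - (1 - th) * k * D3 h a j) ^ 2) (fun j => (c^2*h^2*k^2/4) * ((Dp h (Dm h a) j)^2))) by (repeat simple apply summableZ_plus; assumption).
  rewrite (sumZ_scal (c^2*h^2*k^2/4) (fun j => (Dp h (Dm h a) j)^2)).
  rewrite (sumZ_scal (k^2) (fun j => (NW h a w j + NA h a j + e j)^2)).
  rewrite (sumZ_scal (c*h*k) (fun j => a j * Dp h (Dm h a) j)).
  rewrite (sumZ_scal (- ((1 - th)*c*h*k^2)) (fun j => D3 h a j * Dp h (Dm h a) j)).
  rewrite (sumZ_scal (k) (fun j => -2 * a j * NW h a w j)).
  rewrite (sumZ_scal (- (2*k)) (fun j => a j * NA h a j)).
  rewrite (sumZ_scal ((1 - th)*k^2) (fun j => 2 * D3 h a j * wbar w j * Dc h a j)).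
  rewrite (sumZ_scal ((1 - th)*k^2) (fun j => 2 * D3 h a j * wbar a j * Dw h w j)).
  rewrite (sumZ_scal ((1 - th)*k^2) (fun j => 2 * D3 h a j * wbar a j * Dc h a j)).
  rewrite (sumZ_scal (k) (fun j => -2 * (a j - (1 - th) * k * D3 h a j) * e j)).
  rewrite (sumZ_scal (c*h*k^2) (fun j => - Dp h (Dm h a) j * NW h a w j)).
  rewrite (sumZ_scal (- (c*h*k^2)) (fun j => Dp h (Dm h a) j * NA h a j)).
  rewrite (sumZ_scal (k^2) (fun j => - c * h * Dp h (Dm h a) j * e j)).
  reflexivity.
Qed.

Lemma lin_Q h k th a : 0 < h -> in_l2 a ->
  sumZ (fun j => (a j + th * k * D3 h a j)^2) = sumZ (fun j => a j ^ 2) + (2*th*k) * sumZ (fun j => a j * D3 h a j) + (th^2*k^2) * sumZ (fun j => (D3 h a j)^2).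
Proof.
  intros Hh Ha.
  transitivity (sumZ (fun j => a j ^ 2 + (2*th*k) * (a j * D3 h a j) + (th^2*k^2) * ((D3 h a j)^2))).
  { apply sumZ_ext. intros j. ring. }
  assert (LS0: summableZ (fun j => a j ^ 2)) by l1t.
  assert (LS1: summableZ (fun j => (2*th*k) * (a j * D3 h a j))) by l1t.
  assert (LS2: summableZ (fun j => (th^2*k^2) * ((D3 h a j)^2))) by l1t.
  rewrite (sumZ_plus (fun j => a j ^ 2 + (2*th*k) * (a j * D3 h a j)) (fun j => (th^2*k^2) * ((D3 h a j)^2))) by (repeat simple apply summableZ_plus; assumption).
  rewrite (sumZ_plus (fun j => a j ^ 2) (fun j => (2*th*k) * (a j * D3 h a j))) by (repeat simple apply summableZ_plus; assumption).
  rewrite (sumZ_scal (2*th*k) (fun j => a j * D3 h a j)).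
  rewrite (sumZ_scal (th^2*k^2) (fun j => (D3 h a j)^2)).
  reflexivity.
Qed.

Lemma lin_Z h k th a : 0 < h -> in_l2 a ->
  sumZ (fun j => (a j - (1 - th) * k * D3 h a j)^2) = sumZ (fun j => a j ^ 2) + (-(2*(1-th)*k)) * sumZ (fun j => a j * D3 h a j) + ((1-th)^2*k^2) * sumZ (fun j => (D3 h a j)^2).
Proof.
  intros Hh Ha.
  transitivity (sumZ (fun j => a j ^ 2 + (-(2*(1-th)*k)) * (a j * D3 h a j) + ((1-th)^2*k^2) * ((D3 h a j)^2))).
  { apply sumZ_ext. intros j. ring. }
  assert (LS0: summableZ (fun j => a j ^ 2)) by l1t.
  assert (LS1: summableZ (fun j => (-(2*(1-th)*k)) * (a j * D3 h a j))) by l1t.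
  assert (LS2: summableZ (fun j => ((1-th)^2*k^2) * ((D3 h a j)^2))) by l1t.
  rewrite (sumZ_plus (fun j => a j ^ 2 + (-(2*(1-th)*k)) * (a j * D3 h a j)) (fun j => ((1-th)^2*k^2) * ((D3 h a j)^2))) by (repeat simple apply summableZ_plus; assumption).
  rewrite (sumZ_plus (fun j => a j ^ 2) (fun j => (-(2*(1-th)*k)) * (a j * D3 h a j))) by (repeat simple apply summableZ_plus; assumption).
  rewrite (sumZ_scal (-(2*(1-th)*k)) (fun j => a j * D3 h a j)).
  rewrite (sumZ_scal ((1-th)^2*k^2) (fun j => (D3 h a j)^2)).
  reflexivity.
Qed.

Lemma lin_Cb h k c th Up a : 0 < h -> in_l2 a ->
  sumZ (fun j => Cb k h c th Up a j * (Dp h a j)^2) = (h/6*(h - c*k)) * sumZ (fun j => (Dp h a j)^3) + (-c*(h - c*k) + (1-th)*k*Up) * sumZ (fun j => (Dp h a j)^2).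
Proof.
  intros Hh Ha.
  transitivity (sumZ (fun j => (h/6*(h - c*k)) * ((Dp h a j)^3) + (-c*(h - c*k) + (1-th)*k*Up) * ((Dp h a j)^2))).
  { apply sumZ_ext. intros j. unfold Cb. ring. }
  assert (LS0: summableZ (fun j => (h/6*(h - c*k)) * ((Dp h a j)^3))) by l1t.
  assert (LS1: summableZ (fun j => (-c*(h - c*k) + (1-th)*k*Up) * ((Dp h a j)^2))) by l1t.
  rewrite (sumZ_plus (fun j => (h/6*(h - c*k)) * ((Dp h a j)^3)) (fun j => (-c*(h - c*k) + (1-th)*k*Up) * ((Dp h a j)^2))) by (repeat simple apply summableZ_plus; assumption).
  rewrite (sumZ_scal (h/6*(h - c*k)) (fun j => (Dp h a j)^3)).
  rewrite (sumZ_scal (-c*(h - c*k) + (1-th)*k*Up) (fun j => (Dp h a j)^2)).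
  reflexivity.
Qed.

Lemma lin_aq h a : 0 < h -> in_l2 a ->
  sumZ (fun j => - (Dp h a j)^2) = (-1) * sumZ (fun j => (Dp h a j)^2).
Proof.
  intros Hh Ha.
  transitivity (sumZ (fun j => (-1) * ((Dp h a j)^2))).
  { apply sumZ_ext. intros j. ring. }
  assert (LS0: summableZ (fun j => (-1) * ((Dp h a j)^2))) by l1t.
  rewrite (sumZ_scal (-1) (fun j => (Dp h a j)^2)).
  reflexivity.
Qed.

Lemma lin_as3 h a : 0 < h -> in_l2 a ->
  sumZ (fun j => h / 2 * (Dp h (Dm h a) j)^2) = (h/2) * sumZ (fun j => (Dp h (Dm h a) j)^2).
Proof.
  intros Hh Ha.
  transitivity (sumZ (fun j => (h/2) * ((Dp h (Dm h a) j)^2))).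
  { apply sumZ_ext. intros j. ring. }
  assert (LS0: summableZ (fun j => (h/2) * ((Dp h (Dm h a) j)^2))) by l1t.
  rewrite (sumZ_scal (h/2) (fun j => (Dp h (Dm h a) j)^2)).
  reflexivity.
Qed.

Lemma lin_s3q h a : 0 < h -> in_l2 a ->
  sumZ (fun j => - (h / 2) * (D3 h a j)^2) = (-(h/2)) * sumZ (fun j => (D3 h a j)^2).
Proof.
  intros Hh Ha.
  transitivity (sumZ (fun j => (-(h/2)) * ((D3 h a j)^2))).
  { apply sumZ_ext. intros j. ring. }
  assert (LS0: summableZ (fun j => (-(h/2)) * ((D3 h a j)^2))) by l1t.
  rewrite (sumZ_scal (-(h/2)) (fun j => (D3 h a j)^2)).
  reflexivity.
Qed.

Lemma lin_F2 h a : 0 < h -> in_l2 a ->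
  sumZ (fun j => 4 / h^2 * ((Dp h (Dm h a) j)^2 - (Dp h (Dc h a) j)^2)) = (4/h^2) * sumZ (fun j => (Dp h (Dm h a) j)^2) + (-(4/h^2)) * sumZ (fun j => (Dp h (Dc h a) j)^2).
Proof.
  intros Hh Ha.
  transitivity (sumZ (fun j => (4/h^2) * ((Dp h (Dm h a) j)^2) + (-(4/h^2)) * ((Dp h (Dc h a) j)^2))).
  { apply sumZ_ext. intros j. ring. }
  assert (LS0: summableZ (fun j => (4/h^2) * ((Dp h (Dm h a) j)^2))) by l1t.
  assert (LS1: summableZ (fun j => (-(4/h^2)) * ((Dp h (Dc h a) j)^2))) by l1t.
  rewrite (sumZ_plus (fun j => (4/h^2) * ((Dp h (Dm h a) j)^2)) (fun j => (-(4/h^2)) * ((Dp h (Dc h a) j)^2))) by (repeat simple apply summableZ_plus; assumption).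
  rewrite (sumZ_scal (4/h^2) (fun j => (Dp h (Dm h a) j)^2)).
  rewrite (sumZ_scal (-(4/h^2)) (fun j => (Dp h (Dc h a) j)^2)).
  reflexivity.
Qed.

Lemma lin_F3a h a : 0 < h -> in_l2 a ->
  sumZ (fun j => (Dp h a j)^2 - (Dc h a j)^2) = sumZ (fun j => (Dp h a j)^2) + (-1) * sumZ (fun j => (Dc h a j)^2).
Proof.
  intros Hh Ha.
  transitivity (sumZ (fun j => (Dp h a j)^2 + (-1) * ((Dc h a j)^2))).
  { apply sumZ_ext. intros j. ring. }
  assert (LS0: summableZ (fun j => (Dp h a j)^2)) by l1t.
  assert (LS1: summableZ (fun j => (-1) * ((Dc h a j)^2))) by l1t.
  rewrite (sumZ_plus (fun j => (Dp h a j)^2) (fun j => (-1) * ((Dc h a j)^2))) by (repeat simple apply summableZ_plus; assumption).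
  rewrite (sumZ_scal (-1) (fun j => (Dc h a j)^2)).
  reflexivity.
Qed.

Lemma lin_F3b h a : 0 < h -> in_l2 a ->
  sumZ (fun j => h^2 / 4 * (Dp h (Dm h a) j)^2) = (h^2/4) * sumZ (fun j => (Dp h (Dm h a) j)^2).
Proof.
  intros Hh Ha.
  transitivity (sumZ (fun j => (h^2/4) * ((Dp h (Dm h a) j)^2))).
  { apply sumZ_ext. intros j. ring. }
  assert (LS0: summableZ (fun j => (h^2/4) * ((Dp h (Dm h a) j)^2))) by l1t.
  rewrite (sumZ_scal (h^2/4) (fun j => (Dp h (Dm h a) j)^2)).
  reflexivity.
Qed.

Lemma lin_G1 h a : 0 < h -> in_l2 a ->
  sumZ (fun j => - (h^2 / 12) * (Dp h a j)^3) = (-(h^2/12)) * sumZ (fun j => (Dp h a j)^3).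
Proof.
  intros Hh Ha.
  transitivity (sumZ (fun j => (-(h^2/12)) * ((Dp h a j)^3))).
  { apply sumZ_ext. intros j. ring. }
  assert (LS0: summableZ (fun j => (-(h^2/12)) * ((Dp h a j)^3))) by l1t.
  rewrite (sumZ_scal (-(h^2/12)) (fun j => (Dp h a j)^3)).
  reflexivity.
Qed.

Lemma lin_G3 h a : 0 < h -> in_l2 a ->
  sumZ (fun j => - (2/3) * (Dc h a j)^3 + 1/6 * (Dp h a j)^3) = (-(2/3)) * sumZ (fun j => (Dc h a j)^3) + (1/6) * sumZ (fun j => (Dp h a j)^3).
Proof.
  intros Hh Ha.
  transitivity (sumZ (fun j => (-(2/3)) * ((Dc h a j)^3) + (1/6) * ((Dp h a j)^3))).
  { apply sumZ_ext. intros j. ring. }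
  assert (LS0: summableZ (fun j => (-(2/3)) * ((Dc h a j)^3))) by l1t.
  assert (LS1: summableZ (fun j => (1/6) * ((Dp h a j)^3))) by l1t.
  rewrite (sumZ_plus (fun j => (-(2/3)) * ((Dc h a j)^3)) (fun j => (1/6) * ((Dp h a j)^3))) by (repeat simple apply summableZ_plus; assumption).
  rewrite (sumZ_scal (-(2/3)) (fun j => (Dc h a j)^3)).
  rewrite (sumZ_scal (1/6) (fun j => (Dp h a j)^3)).
  reflexivity.
Qed.

Lemma lin_G2 h Up a : 0 < h -> in_l2 a ->
  sumZ (fun j => Up * a j ^ 2) = (Up) * sumZ (fun j => a j ^ 2).
Proof.
  intros Hh Ha.
  transitivity (sumZ (fun j => (Up) * (a j ^ 2))).
  { apply sumZ_ext. intros j. ring. }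
  assert (LS0: summableZ (fun j => (Up) * (a j ^ 2))) by l1t.
  rewrite (sumZ_scal (Up) (fun j => a j ^ 2)).
  reflexivity.
Qed.

Lemma lin_G5 h Up a : 0 < h -> in_l2 a ->
  sumZ (fun j => 2 * Up / h^2 * a j ^ 2) = (2 * Up / h^2) * sumZ (fun j => a j ^ 2).
Proof.
  intros Hh Ha.
  transitivity (sumZ (fun j => (2 * Up / h^2) * (a j ^ 2))).
  { apply sumZ_ext. intros j. ring. }
  assert (LS0: summableZ (fun j => (2 * Up / h^2) * (a j ^ 2))) by l1t.
  rewrite (sumZ_scal (2 * Up / h^2) (fun j => a j ^ 2)).
  reflexivity.
Qed.

Lemma lin_H1 h U Up Um a : 0 < h -> in_l2 a ->
  sumZ (fun j => 2 * U * (Dp h (Dc h a) j)^2 + (h * Um / 2 + Up) * (Dp h (Dm h a) j)^2 + Up * (Dp h a j)^2) = (2*U) * sumZ (fun j => (Dp h (Dc h a) j)^2) + (h * Um / 2 + Up) * sumZ (fun j => (Dp h (Dm h a) j)^2) + (Up) * sumZ (fun j => (Dp h a j)^2).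
Proof.
  intros Hh Ha.
  transitivity (sumZ (fun j => (2*U) * ((Dp h (Dc h a) j)^2) + (h * Um / 2 + Up) * ((Dp h (Dm h a) j)^2) + (Up) * ((Dp h a j)^2))).
  { apply sumZ_ext. intros j. ring. }
  assert (LS0: summableZ (fun j => (2*U) * ((Dp h (Dc h a) j)^2))) by l1t.
  assert (LS1: summableZ (fun j => (h * Um / 2 + Up) * ((Dp h (Dm h a) j)^2))) by l1t.
  assert (LS2: summableZ (fun j => (Up) * ((Dp h a j)^2))) by l1t.
  rewrite (sumZ_plus (fun j => (2*U) * ((Dp h (Dc h a) j)^2) + (h * Um / 2 + Up) * ((Dp h (Dm h a) j)^2)) (fun j => (Up) * ((Dp h a j)^2))) by (repeat simple apply summableZ_plus; assumption).
  rewrite (sumZ_plus (fun j => (2*U) * ((Dp h (Dc h a) j)^2)) (fun j => (h * Um / 2 + Up) * ((Dp h (Dm h a) j)^2))) by (repeat simple apply summableZ_plus; assumption).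
  rewrite (sumZ_scal (2*U) (fun j => (Dp h (Dc h a) j)^2)).
  rewrite (sumZ_scal (h * Um / 2 + Up) (fun j => (Dp h (Dm h a) j)^2)).
  rewrite (sumZ_scal (Up) (fun j => (Dp h a j)^2)).
  reflexivity.
Qed.

Lemma lin_H2 h k Up a : 0 < h -> in_l2 a ->
  sumZ (fun j => k * Up * (D3 h a j)^2 + Up / k * a j ^ 2) = (k*Up) * sumZ (fun j => (D3 h a j)^2) + (Up/k) * sumZ (fun j => a j ^ 2).
Proof.
  intros Hh Ha.
  transitivity (sumZ (fun j => (k*Up) * ((D3 h a j)^2) + (Up/k) * (a j ^ 2))).
  { apply sumZ_ext. intros j. ring. }
  assert (LS0: summableZ (fun j => (k*Up) * ((D3 h a j)^2))) by l1t.
  assert (LS1: summableZ (fun j => (Up/k) * (a j ^ 2))) by l1t.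
  rewrite (sumZ_plus (fun j => (k*Up) * ((D3 h a j)^2)) (fun j => (Up/k) * (a j ^ 2))) by (repeat simple apply summableZ_plus; assumption).
  rewrite (sumZ_scal (k*Up) (fun j => (D3 h a j)^2)).
  rewrite (sumZ_scal (Up/k) (fun j => a j ^ 2)).
  reflexivity.
Qed.

Lemma lin_H3 h E a : 0 < h -> in_l2 a ->
  sumZ (fun j => 2 * E * (Dp h (Dc h a) j)^2 + 7 * E * (Dp h (Dm h a) j)^2) = (2*E) * sumZ (fun j => (Dp h (Dc h a) j)^2) + (7*E) * sumZ (fun j => (Dp h (Dm h a) j)^2).
Proof.
  intros Hh Ha.
  transitivity (sumZ (fun j => (2*E) * ((Dp h (Dc h a) j)^2) + (7*E) * ((Dp h (Dm h a) j)^2))).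
  { apply sumZ_ext. intros j. ring. }
  assert (LS0: summableZ (fun j => (2*E) * ((Dp h (Dc h a) j)^2))) by l1t.
  assert (LS1: summableZ (fun j => (7*E) * ((Dp h (Dm h a) j)^2))) by l1t.
  rewrite (sumZ_plus (fun j => (2*E) * ((Dp h (Dc h a) j)^2)) (fun j => (7*E) * ((Dp h (Dm h a) j)^2))) by (repeat simple apply summableZ_plus; assumption).
  rewrite (sumZ_scal (2*E) (fun j => (Dp h (Dc h a) j)^2)).
  rewrite (sumZ_scal (7*E) (fun j => (Dp h (Dm h a) j)^2)).
  reflexivity.
Qed.

Lemma lin_I3 h c a e : 0 < h -> in_l2 a -> in_l2 e ->
  sumZ (fun j => 2 / h * (c^2 * a j ^ 2 + e j ^ 2)) = (2/h*c^2) * sumZ (fun j => a j ^ 2) + (2/h) * sumZ (fun j => e j ^ 2).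
Proof.
  intros Hh Ha He.
  transitivity (sumZ (fun j => (2/h*c^2) * (a j ^ 2) + (2/h) * (e j ^ 2))).
  { apply sumZ_ext. intros j. ring. }
  assert (LS0: summableZ (fun j => (2/h*c^2) * (a j ^ 2))) by l1t.
  assert (LS1: summableZ (fun j => (2/h) * (e j ^ 2))) by l1t.
  rewrite (sumZ_plus (fun j => (2/h*c^2) * (a j ^ 2)) (fun j => (2/h) * (e j ^ 2))) by (repeat simple apply summableZ_plus; assumption).
  rewrite (sumZ_scal (2/h*c^2) (fun j => a j ^ 2)).
  rewrite (sumZ_scal (2/h) (fun j => e j ^ 2)).
  reflexivity.
Qed.

Lemma lin_G4a h a : 0 < h -> in_l2 a ->
  sumZ (fun j => h * (Dc h a j)^3) = (h) * sumZ (fun j => (Dc h a j)^3).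
Proof.
  intros Hh Ha.
  transitivity (sumZ (fun j => (h) * ((Dc h a j)^3))).
  { apply sumZ_ext. intros j. ring. }
  assert (LS0: summableZ (fun j => (h) * ((Dc h a j)^3))) by l1t.
  rewrite (sumZ_scal (h) (fun j => (Dc h a j)^3)).
  reflexivity.
Qed.

Lemma lin_G4b h E a : 0 < h -> in_l2 a ->
  sumZ (fun j => E * (Dc h a j)^2) = (E) * sumZ (fun j => (Dc h a j)^2).
Proof.
  intros Hh Ha.
  transitivity (sumZ (fun j => (E) * ((Dc h a j)^2))).
  { apply sumZ_ext. intros j. ring. }
  assert (LS0: summableZ (fun j => (E) * ((Dc h a j)^2))) by l1t.
  rewrite (sumZ_scal (E) (fun j => (Dc h a j)^2)).
  reflexivity.
Qed.

Lemma lin_I1 h k th a e : 0 < h -> in_l2 a -> in_l2 e ->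
  sumZ (fun j => (a j - (1 - th) * k * D3 h a j)^2 + e j ^ 2) = sumZ (fun j => (a j - (1 - th) * k * D3 h a j)^2) + sumZ (fun j => e j ^ 2).
Proof.
  intros Hh Ha He.
  transitivity (sumZ (fun j => (a j - (1 - th) * k * D3 h a j)^2 + e j ^ 2)).
  { apply sumZ_ext. intros j. ring. }
  assert (LS0: summableZ (fun j => (a j - (1 - th) * k * D3 h a j)^2)) by l1t.
  assert (LS1: summableZ (fun j => e j ^ 2)) by l1t.
  rewrite (sumZ_plus (fun j => (a j - (1 - th) * k * D3 h a j)^2) (fun j => e j ^ 2)) by (repeat simple apply summableZ_plus; assumption).
  reflexivity.
Qed.

Lemma lin_I4 h a w e : 0 < h -> in_l2 a -> bnd w -> in_l2 e ->
  sumZ (fun j => (1 + h/2) * (NW h a w j + NA h a j)^2 + (1 + 2/h) * e j ^ 2) = sumZ (fun j => (1 + h/2) * (NW h a w j + NA h a j)^2) + (1 + 2/h) * sumZ (fun j => e j ^ 2).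
Proof.
  intros Hh Ha Hw He.
  transitivity (sumZ (fun j => (1 + h/2) * (NW h a w j + NA h a j)^2 + (1 + 2/h) * (e j ^ 2))).
  { apply sumZ_ext. intros j. ring. }
  assert (LS0: summableZ (fun j => (1 + h/2) * (NW h a w j + NA h a j)^2)) by l1t.
  assert (LS1: summableZ (fun j => (1 + 2/h) * (e j ^ 2))) by l1t.
  rewrite (sumZ_plus (fun j => (1 + h/2) * (NW h a w j + NA h a j)^2) (fun j => (1 + 2/h) * (e j ^ 2))) by (repeat simple apply summableZ_plus; assumption).
  rewrite (sumZ_scal (1 + 2/h) (fun j => e j ^ 2)).
  reflexivity.
Qed.

Lemma lin_B8 h k U E Up a : 0 < h -> in_l2 a ->
  sumZ (fun j => ((U + E)^2 + h * E^2) * (Dc h a j)^2 + (U^2 * (1/k + 1/h) + Up / h * (2 * E / 3 + 3 * U / 2) + Up^2 * k / h^2) * a j ^ 2) = ((U + E)^2 + h * E^2) * sumZ (fun j => (Dc h a j)^2) + ((U^2 * (1/k + 1/h) + Up / h * (2 * E / 3 + 3 * U / 2) + Up^2 * k / h^2)) * sumZ (fun j => a j ^ 2).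
Proof.
  intros Hh Ha.
  transitivity (sumZ (fun j => ((U + E)^2 + h * E^2) * ((Dc h a j)^2) + ((U^2 * (1/k + 1/h) + Up / h * (2 * E / 3 + 3 * U / 2) + Up^2 * k / h^2)) * (a j ^ 2))).
  { apply sumZ_ext. intros j. ring. }
  assert (LS0: summableZ (fun j => ((U + E)^2 + h * E^2) * ((Dc h a j)^2))) by l1t.
  assert (LS1: summableZ (fun j => ((U^2 * (1/k + 1/h) + Up / h * (2 * E / 3 + 3 * U / 2) + Up^2 * k / h^2)) * (a j ^ 2))) by l1t.
  rewrite (sumZ_plus (fun j => ((U + E)^2 + h * E^2) * ((Dc h a j)^2)) (fun j => ((U^2 * (1/k + 1/h) + Up / h * (2 * E / 3 + 3 * U / 2) + Up^2 * k / h^2)) * (a j ^ 2))) by (repeat simple apply summableZ_plus; assumption).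
  rewrite (sumZ_scal ((U + E)^2 + h * E^2) (fun j => (Dc h a j)^2)).
  rewrite (sumZ_scal ((U^2 * (1/k + 1/h) + Up / h * (2 * E / 3 + 3 * U / 2) + Up^2 * k / h^2)) (fun j => a j ^ 2)).
  reflexivity.
Qed.

Ltac pos := repeat (first [ lra | apply Rmult_le_pos | apply Rplus_le_le_0_compat | apply pow_le | (left; apply Rinv_0_lt_compat) | apply pow_lt | apply Rmult_lt_0_compat | apply sqrt_pos ]).

Lemma hDc_bound h a E j : 0 < h -> (forall j, Rabs (a j) <= E) -> Rabs (h * Dc h a j) <= E.
Proof. intros Hh HE. unfold Dc, Dp, Dm.
  replace (h * (((a (j + 1)%Z - a j) / h + (a j - a (j - 1)%Z) / h) / 2)) with ((a (j + 1)%Z - a (j - 1)%Z) / 2) by (field; lra).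
  pose proof (abs_le_iff _ _ (HE (j+1)%Z)). pose proof (abs_le_iff _ _ (HE (j-1)%Z)). apply Rabs_le_between. lra. Qed.

Lemma assembly (h k c th U Up Um E X : R) (a w e : seqZ) :
 0 < h -> 0 < k -> 0 < c -> 0 <= th < 1/2 -> k * (1 - 2*th) <= h^3/4 -> in_l2 a -> bnd w -> in_l2 e ->
 (forall j, Rabs (a j) <= E) -> (forall j, Rabs (w j) <= U) -> (forall j, Rabs (Dp h w j) <= Up) -> (forall j, Rabs (Dm h w j) <= Um) -> 7 * E <= X ->
 sumZ (fun j => (a j - k * (NW h a w j + NA h a j) - (1 - th) * k * D3 h a j + c * h * k / 2 * Dp h (Dm h a) j - k * e j) ^ 2)
 <= sumZ (fun j => (a j + th * k * D3 h a j)^2) * (1 + Ea k h c U Up E * k)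
    + k * sumZ (fun j => e j ^ 2) * (1 + 4 * k / h + k)
    + k * sumZ (fun j => Cb k h c th Up a j * (Dp h a j)^2)
    + k ^ 2 * Cc h c U E * sumZ (fun j => (Dc h a j)^2)
    + k * Cd k h c th Up Um X * sumZ (fun j => (Dp h (Dm h a) j)^2)
    + k * Ce k h c th U Up E X * sumZ (fun j => (Dp h (Dc h a) j)^2).
Proof.
 intros Hh Hk Hc Hth Hcfl Ha Hw He HE HU HUp HUm HX.
 assert (E0: 0 <= E) by (pose proof (HE 0%Z); pose proof (Rabs_pos (a 0%Z)); lra).
 assert (U0: 0 <= U) by (pose proof (HU 0%Z); pose proof (Rabs_pos (w 0%Z)); lra).
 assert (Up0: 0 <= Up) by (pose proof (HUp 0%Z); pose proof (Rabs_pos (Dp h w 0%Z)); lra).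
 assert (Um0: 0 <= Um) by (pose proof (HUm 0%Z); pose proof (Rabs_pos (Dm h w 0%Z)); lra).
 rewrite (expand_Phi h k c th a w e Hh Ha Hw He).
 rewrite (lin_Q h k th a Hh Ha), (lin_Z h k th a Hh Ha), (lin_Cb h k c th Up a Hh Ha).
 pose proof (S_aq h a Hh Ha) as e1. rewrite (lin_aq h a Hh Ha) in e1.
 pose proof (S_as3 h a Hh Ha) as e2. rewrite (lin_as3 h a Hh Ha) in e2.
 pose proof (S_s3q h a Hh Ha) as e3. rewrite (lin_s3q h a Hh Ha) in e3.
 pose proof (S_F2 h a Hh Ha) as e4. rewrite (lin_F2 h a Hh Ha) in e4.
 pose proof (S_F3 h a Hh Ha) as e5. rewrite (lin_F3a h a Hh Ha), (lin_F3b h a Hh Ha) in e5.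
 pose proof (S_G1 h a Hh Ha) as e6. rewrite (lin_G1 h a Hh Ha) in e6.
 pose proof (S_G3 h a Hh Ha) as e7. rewrite (lin_G3 h a Hh Ha) in e7.
 pose proof (S_G2 h Up a w Hh Ha Hw HUp) as f1. rewrite (lin_G2 h Up a Hh Ha) in f1.
 pose proof (S_G5 h Up a w Hh Ha Hw HUp) as f2. rewrite (lin_G5 h Up a Hh Ha) in f2.
 pose proof (S_H1 h U Up Um a w Hh Ha Hw HU HUp HUm) as f3. rewrite (lin_H1 h U Up Um a Hh Ha) in f3.
 pose proof (S_H2 h k Up a w Hh Hk Ha Hw HUp) as f4. rewrite (lin_H2 h k Up a Hh Ha) in f4.
 pose proof (S_H3 h E a Hh Ha HE) as f5. rewrite (lin_H3 h E a Hh Ha) in f5.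
 assert (f6: sumZ (fun j => h * (Dc h a j)^3) <= sumZ (fun j => E * (Dc h a j)^2)).
 { apply sumZ_le; [l1t|l1t|]. intros j. apply PW_G4. apply hDc_bound; auto. }
 rewrite (lin_G4a h a Hh Ha), (lin_G4b h E a Hh Ha) in f6.
 assert (f7: sumZ (fun j => -2 * (a j - (1 - th) * k * D3 h a j) * e j) <= sumZ (fun j => (a j - (1 - th) * k * D3 h a j)^2 + e j ^ 2)).
 { apply sumZ_le; [l1t|l1t|]. intros j. apply PW_I1. }
 rewrite (lin_I1 h k th a e Hh Ha He), (lin_Z h k th a Hh Ha) in f7.
 pose proof (S_I3 h c a e Hh Ha He) as f8. rewrite (lin_I3 h c a e Hh Ha He) in f8.
 assert (f9: sumZ (fun j => (NW h a w j + NA h a j + e j)^2) <= sumZ (fun j => (1 + h/2) * (NW h a w j + NA h a j)^2 + (1 + 2/h) * e j ^ 2)).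
 { apply sumZ_le; [l1t|l1t|]. intros j. apply PW_I4; auto. }
 rewrite (lin_I4 h a w e Hh Ha Hw He) in f9.
 pose proof (S_B8 h k U E Up a w Hh Hk Ha Hw HE HU HUp) as f10. rewrite (lin_B8 h k U E Up a Hh Ha) in f10.
 assert (n1: 0 <= sumZ (fun j => a j ^ 2)) by (apply sumZ_nonneg; [l1t|intros; apply pow2_ge_0]).
 assert (n2: 0 <= sumZ (fun j => (Dp h (Dm h a) j)^2)) by (apply sumZ_nonneg; [l1t|intros; apply pow2_ge_0]).
 assert (n3: 0 <= sumZ (fun j => (Dp h (Dc h a) j)^2)) by (apply sumZ_nonneg; [l1t|intros; apply pow2_ge_0]).
 assert (n4: 0 <= sumZ (fun j => (Dc h a j)^2)) by (apply sumZ_nonneg; [l1t|intros; apply pow2_ge_0]).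
 assert (n5: 0 <= sumZ (fun j => e j ^ 2)) by (apply sumZ_nonneg; [l1t|intros; apply pow2_ge_0]).
 assert (n6: 0 <= sumZ (fun j => (D3 h a j)^2)) by (apply sumZ_nonneg; [l1t|intros; apply pow2_ge_0]).
 rewrite e3 in *. rewrite e2 in *. rewrite e1 in *. rewrite e6 in *. rewrite e7 in *. rewrite e4 in *.
 assert (e5': sumZ (fun j => (Dp h a j)^2) = sumZ (fun j => (Dc h a j)^2) + h^2/4 * sumZ (fun j => (Dp h (Dm h a) j)^2)) by lra.
 rewrite e5' in *.
 set (A0 := sumZ (fun j => a j ^ 2)) in *.
 set (Sq := sumZ (fun j => (Dp h (Dm h a) j)^2)) in *.
 set (Sr := sumZ (fun j => (Dp h (Dc h a) j)^2)) in *.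
 set (SD := sumZ (fun j => (Dc h a j)^2)) in *.
 set (Sp3 := sumZ (fun j => (Dp h a j)^3)) in *.
 set (SD3 := sumZ (fun j => (Dc h a j)^3)) in *.
 set (Se := sumZ (fun j => e j ^ 2)) in *.
 set (XG2 := sumZ (fun j => -2 * a j * NW h a w j)) in *.
 set (XG5 := sumZ (fun j => - Dp h (Dm h a) j * NW h a w j)) in *.
 set (XH1 := sumZ (fun j => 2 * D3 h a j * wbar w j * Dc h a j)) in *.
 set (XH2 := sumZ (fun j => 2 * D3 h a j * wbar a j * Dw h w j)) in *.
 set (XH3 := sumZ (fun j => 2 * D3 h a j * wbar a j * Dc h a j)) in *.
 set (XI1 := sumZ (fun j => -2 * (a j - (1 - th) * k * D3 h a j) * e j)) in *.
 set (XI3 := sumZ (fun j => - c * h * Dp h (Dm h a) j * e j)) in *.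
 set (XNe := sumZ (fun j => (NW h a w j + NA h a j + e j)^2)) in *.
 set (XN := sumZ (fun j => (1 + h/2) * (NW h a w j + NA h a j)^2)) in *.
 set (sq := sqrt 2 * sqrt k / sqrt h).
 assert (sq0: 0 <= sq). { unfold sq. apply Rmult_le_pos. apply Rmult_le_pos; apply sqrt_pos. left; apply Rinv_0_lt_compat. apply sqrt_lt_R0; lra. }
 assert (sqh: sqrt h <> 0) by (apply Rgt_not_eq, sqrt_lt_R0; lra).
 unfold Ea, Cc, Cd, Ce. fold sq.
 match goal with |- ?L <= ?R => cut (0 <= R - L); [lra|] end.
 match goal with |- 0 <= ?D => replace D with (k * (Up*A0 - XG2)
 + c*h*k^2 * (2*Up/h^2*A0 - XG5)
 + (1-th)*k^2 * (2*U*Sr + (h*Um/2 + Up)*Sq + Up*(SD + h^2/4*Sq) - XH1)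
 + (1-th)*k^2 * (k*Up*(4/h^2*Sq + -(4/h^2)*Sr) + Up/k*A0 - XH2)
 + (1-th)*k^2 * (2*E*Sr + 7*E*Sq - XH3)
 + 2/3*c*k^2 * (E*SD - h*SD3)
 + k * ((A0 + -(2*(1-th)*k)*(h/2*Sq) + (1-th)^2*k^2*(4/h^2*Sq + -(4/h^2)*Sr)) + Se - XI1)
 + k^2 * (2/h*c^2*A0 + 2/h*Se - XI3)
 + k^2 * (XN + (1 + 2/h)*Se - XNe)
 + k^2 * (((U+E)^2 + h*E^2)*SD + (U^2*(1/k + 1/h) + Up/h*(2*E/3 + 3*U/2) + Up^2*k/h^2)*A0 - XN)
 + k * ((A0 + 2*th*k*(h/2*Sq) + th^2*k^2*(4/h^2*Sq + -(4/h^2)*Sr)) - (A0 + -(2*(1-th)*k)*(h/2*Sq) + (1-th)^2*k^2*(4/h^2*Sq + -(4/h^2)*Sr)))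
 + k * (Up*(2-th) + 2*c*Up*k/h + 2*c^2*k/h + U^2*(1+k/h) + Up*k/h*(2*E/3+3*U/2) + Up^2*k^2/h^2) * ((A0 + 2*th*k*(h/2*Sq) + th^2*k^2*(4/h^2*Sq + -(4/h^2)*Sr)) - A0)
 + k * (Up*(5+th) + Up^2*sq) * (A0 + 2*th*k*(h/2*Sq) + th^2*k^2*(4/h^2*Sq + -(4/h^2)*Sr))
 + (1-th)*k^2 * ((X - 7*E)*Sq)) by (unfold sq; field; repeat split; lra) end.
 assert (T1: (1-2*th)*k^2*(4/h^2*Sq + -(4/h^2)*Sr) <= (1-2*th)*k^2*(4/h^2*Sq)).
 { apply Rmult_le_compat_l. pos. assert (0 <= 4/h^2*Sr) by pos. lra. }
 assert (T2: (1-2*th)*k^2*(4/h^2*Sq) <= k*h*Sq).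
 { replace ((1-2*th)*k^2*(4/h^2*Sq)) with ((k * (1-2*th)) * (4*k/h^2) * Sq) by (field; lra).
   apply Rle_trans with ((h^3/4) * (4*k/h^2) * Sq).
   apply Rmult_le_compat_r; [lra|]. apply Rmult_le_compat_r; [pos|lra].
   right. field. lra. }
 repeat apply Rplus_le_le_0_compat.
 - apply Rmult_le_pos; [pos|lra].
 - apply Rmult_le_pos; [pos|lra].
 - apply Rmult_le_pos; [pos|lra].
 - apply Rmult_le_pos; [pos|lra].
 - apply Rmult_le_pos; [pos|lra].
 - apply Rmult_le_pos; [pos|lra].
 - apply Rmult_le_pos; [pos|lra].
 - apply Rmult_le_pos; [pos|lra].
 - apply Rmult_le_pos; [pos|lra].
 - apply Rmult_le_pos; [pos|lra].
 - apply Rmult_le_pos; [pos|]. replace ((A0 + 2*th*k*(h/2*Sq) + th^2*k^2*(4/h^2*Sq + -(4/h^2)*Sr)) - (A0 + -(2*(1-th)*k)*(h/2*Sq) + (1-th)^2*k^2*(4/h^2*Sq + -(4/h^2)*Sr))) with (k*h*Sq - (1-2*th)*k^2*(4/h^2*Sq + -(4/h^2)*Sr)) by (field; lra). lra.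
 - apply Rmult_le_pos; [pos|]. replace ((A0 + 2*th*k*(h/2*Sq) + th^2*k^2*(4/h^2*Sq + -(4/h^2)*Sr)) - A0) with (th*k*h*Sq + th^2*k^2*(4/h^2*Sq + -(4/h^2)*Sr)) by (field; lra).
   assert (0 <= th*k*h*Sq) by pos. assert (0 <= th^2*k^2*(4/h^2*Sq + -(4/h^2)*Sr)) by (apply Rmult_le_pos; [pos|lra]). lra.
 - apply Rmult_le_pos; [pos|]. replace (A0 + 2*th*k*(h/2*Sq) + th^2*k^2*(4/h^2*Sq + -(4/h^2)*Sr)) with (A0 + th*k*h*Sq + th^2*k^2*(4/h^2*Sq + -(4/h^2)*Sr)) by (field; lra).
   assert (0 <= th*k*h*Sq) by pos. assert (0 <= th^2*k^2*(4/h^2*Sq + -(4/h^2)*Sr)) by (apply Rmult_le_pos; [pos|lra]). lra.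
 - apply Rmult_le_pos; [pos|]. apply Rmult_le_pos; lra.
Qed.

Lemma normD_sq dx f : 0 < dx -> in_l2 f -> normD dx f ^ 2 = dx * sumZ (fun j => f j ^ 2).
Proof. intros Hdx Hf. unfold normD, innerD.
  rewrite (sumZ_ext (fun j => f j * f j) (fun j => f j ^ 2)) by (intros; ring).
  apply pow2_sqrt. apply Rmult_le_pos. lra. apply sumZ_nonneg. exact Hf. intros; apply pow2_ge_0. Qed.

Lemma Xc_ge dx g E : 0 < dx -> 0 <= E -> 7 * E <= Xc dx g E.
Proof. intros Hdx HE. unfold Xc. set (A := Rpower dx (1/2 - g)).
  assert (HA: 0 < A) by (unfold A, Rpower; apply exp_pos).
  replace (g - 1/2) with (- (1/2 - g)) by ring. rewrite Rpower_Ropp. fold A.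
  assert (6 * E * A <= A^2 + 9 * E^2) by (pose proof (pow2_ge_0 (A - 3*E)); nra).
  assert (6 * E <= A + 9 * E^2 * / A).
  { apply Rmult_le_reg_r with A; auto. replace ((A + 9 * E ^ 2 * / A) * A) with (A^2 + 9*E^2) by (field; lra). lra. }
  lra. Qed.

Lemma D3_sub h f g j : D3 h (fun i => f i - g i) j = D3 h f j - D3 h g j.
Proof. unfold D3, Dp, Dm. unfold Rdiv. ring. Qed.
Lemma DpDm_sub h f g j : Dp h (Dm h (fun i => f i - g i)) j = Dp h (Dm h f) j - Dp h (Dm h g) j.
Proof. unfold Dp, Dm. unfold Rdiv. ring. Qed.
Lemma Nsub h v w j : 0 < h -> Dc h (fun i => v i ^ 2 / 2) j - Dc h (fun i => w i ^ 2 / 2) j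
   = NW h (fun i => v i - w i) w j + NA h (fun i => v i - w i) j.
Proof. intros. unfold Dc, Dp, Dm, NW, NA. field. lra. Qed.


Theorem corollary4
  (s : nat) (u0 : R -> R) (u : R -> R -> R) (T c dt dx th : R)
  (v : nat -> seqZ) (n : nat) (g : R) :
  Hs s u0 ->
  KdV_solution s T u0 u ->
  0 < T -> 0 < c -> 0 < dt -> 0 < dx ->
  0 <= th < 1/2 ->
  dt * (1 - 2 * th) <= dx ^ 3 / 4 ->
  (forall j, v O j = avg0 dx u0 j) ->
  scheme dt dx c th v ->
  (n < Nsteps T dt)%nat ->
  0 <= g < 1/2 ->
  let w := uavg T dt dx u0 u in
  let e := fun m j => v m j - w m j in
  let eps := cons_err dt dx c th w n in
  (* finiteness of the quantities involved (s large enough) *)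
  in_l2 (e n) -> in_l2 (e (S n)) -> in_l2 eps -> boundedZ (w n) ->
  let U := norminf (w n) in
  let Up := norminf (Dp dx (w n)) in
  let Um := norminf (Dm dx (w n)) in
  let E := norminf (e n) in
  let X := Xc dx g E in
  normD dx (Atheta dx dt th (e (S n))) ^ 2
  <= normD dx (Atheta dx dt th (e n)) ^ 2 * (1 + Ea dt dx c U Up E * dt)
     + dt * normD dx eps ^ 2 * (1 + 4 * dt / dx + dt)
     + dt * innerD dx (Cb dt dx c th Up (e n)) (fun j => (Dp dx (e n) j) ^ 2)
     + dt ^ 2 * Cc dx c U E * normD dx (Dc dx (e n)) ^ 2
     + dt * Cd dt dx c th Up Um X * normD dx (Dp dx (Dm dx (e n))) ^ 2
     + dt * Ce dt dx c th U Up E X * normD dx (Dp dx (Dc dx (e n))) ^ 2.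
Proof.
  intros Hs Hsol HT Hc Hdt Hdx Hth Hcfl Hv0 Hsch Hn Hg w e eps Hl2 Hl2' Hl2e Hbw U Up Um E X.
  set (a := e n) in *. set (wn := w n) in *.
  assert (Hbw' : bnd wn) by exact Hbw.
  assert (Hba : bnd a) by (apply l2_bnd; auto).
  assert (HE : forall j, Rabs (a j) <= E) by (intros; apply norminf_ge; auto).
  assert (HU : forall j, Rabs (wn j) <= U) by (intros; apply norminf_ge; auto).
  assert (HUp : forall j, Rabs (Dp dx wn j) <= Up) by (intros; apply norminf_ge; apply bnd_Dp; auto).
  assert (HUm : forall j, Rabs (Dm dx wn j) <= Um) by (intros; apply norminf_ge; apply bnd_Dm; auto).
  assert (E0 : 0 <= E) by (apply norminf_nonneg; auto).
  assert (HX : 7 * E <= X) by (apply Xc_ge; auto).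
  pose proof (assembly dx dt c th U Up Um E X a wn eps Hdx Hdt Hc Hth Hcfl Hl2 Hbw' Hl2e HE HU HUp HUm HX) as AS.
  assert (HA : forall j, Atheta dx dt th (e (S n)) j =
     a j - dt * (NW dx a wn j + NA dx a j) - (1 - th) * dt * D3 dx a j + c * dx * dt / 2 * Dp dx (Dm dx a) j - dt * eps j).
  { intros j. unfold Atheta. unfold a, e, eps, cons_err. cbv beta.
    rewrite D3_sub, DpDm_sub, D3_sub. fold wn.
    rewrite <- (Nsub dx (v n) wn j Hdx).
    pose proof (Hsch n j) as S1.
    set (X1 := D3 dx (v (S n)) j) in *. set (X2 := D3 dx (w (S n)) j) in *.
    set (Y1 := D3 dx (v n) j) in *. set (Y2 := D3 dx wn j) in *.
    set (Z1 := Dc dx (fun i => v n i ^ 2 / 2) j) in *. set (Z2 := Dc dx (fun i => wn i ^ 2 / 2) j) in *.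
    set (P1 := Dp dx (Dm dx (v n)) j) in *. set (P2 := Dp dx (Dm dx wn) j) in *.
    assert (Hv: v (S n) j = v n j + dt * (c * dx / 2 * P1 - Z1 - th * X1 - (1 - th) * Y1)).
    { rewrite <- S1. field. lra. }
    rewrite Hv. field. lra. }
  assert (L2e1 : in_l2 (Atheta dx dt th (e (S n)))).
  { unfold Atheta. l2t. }
  rewrite normD_sq by auto.
  rewrite (sumZ_ext (fun j => Atheta dx dt th (e (S n)) j ^ 2) (fun j => (a j - dt * (NW dx a wn j + NA dx a j) - (1 - th) * dt * D3 dx a j + c * dx * dt / 2 * Dp dx (Dm dx a) j - dt * eps j) ^ 2)) by (intros; rewrite HA; reflexivity).
  rewrite (normD_sq dx (Atheta dx dt th a)) by (auto; unfold Atheta; l2t).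
  rewrite (sumZ_ext (fun j => Atheta dx dt th a j ^ 2) (fun j => (a j + th * dt * D3 dx a j) ^ 2)) by (intros; unfold Atheta; f_equal; ring).
  rewrite (normD_sq dx eps) by auto.
  rewrite (normD_sq dx (Dc dx a)) by (auto; l2t).
  rewrite (normD_sq dx (Dp dx (Dm dx a))) by (auto; l2t).
  rewrite (normD_sq dx (Dp dx (Dc dx a))) by (auto; l2t).
  unfold innerD.
  apply Rle_trans with (dx * (sumZ (fun j => (a j + th * dt * D3 dx a j)^2) * (1 + Ea dt dx c U Up E * dt)
    + dt * sumZ (fun j => eps j ^ 2) * (1 + 4 * dt / dx + dt)
    + dt * sumZ (fun j => Cb dt dx c th Up a j * (Dp dx a j)^2)
    + dt ^ 2 * Cc dx c U E * sumZ (fun j => (Dc dx a j)^2)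
    + dt * Cd dt dx c th Up Um X * sumZ (fun j => (Dp dx (Dm dx a) j)^2)
    + dt * Ce dt dx c th U Up E X * sumZ (fun j => (Dp dx (Dc dx a) j)^2))).
  { apply Rmult_le_compat_l; [lra|]. exact AS. }
  right. ring.
Qed.
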